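(* Let $\vec{\mathcal X}$ be a couple of translation invariant pseudolattices and $\vec B=(B_0,B_1)$ a complex Banach couple. Let $\{f_n\}_{n\in\mathbb Z}\in\mathcal J(\vec{\mathcal X},\vec B)$ and $f(z)=\sum_{n\in\mathbb Z}z^nf_n$, $z\in\mathbb A$. Suppose $f(s)=0$ for some $s\in\mathbb A$, and define $g:\mathbb A\to B_0+B_1$ by $g(s)=f'(s)$ and $g(z)=f(z)/(z-s)$ for $z\ne s$. Then $g\in\mathcal F_{\vec{\mathcal X}}(\vec B)$, and the Laurent coefficients $\{g_n\}$ of $g$ on $\mathbb A$ (i.e. $g(z)=\sum_n z^ng_n$) satisfy $\{g_n\}\in\mathcal J(\vec{\mathcal X},\vec B)$ and $$\|\{g_n\}\|_{\mathcal J(\vec{\mathcal X},\vec B)}\le\delta(s)\|\{f_n\}\|_{\mathcal J(\vec{\mathcal X},\vec B)},\qquad \delta(s)=\max\{(|s|-1)^{-1},(e-|s|)^{-1}\}.$$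
   Context: A pseudolattice $\mathcal{X}$ assigns to every complex Banach space $B$ a Banach space $\mathcal{X}(B)$ of two-sided sequences in $B$ such that: $\mathcal X(A)$ is a closed subspace of $\mathcal X(B)$ when $A$ is a closed subspace of $B$; $\|\{Ta_n\}\|_{\mathcal{X}(B)}\le C\|T\|\|\{a_n\}\|_{\mathcal{X}(A)}$ for bounded linear $T:A\to B$ with a fixed $C$; and $\|b_m\|_B\le\|\{b_n\}\|_{\mathcal{X}(B)}$. A couple $(\mathcal X_0,\mathcal X_1)$ is translation invariant if the shifts $\{b_n\}\mapsto\{b_{n+k}\}$, $k\in\mathbb Z$, are isometries of each $\mathcal X_j(B)$ onto itself for every $B$. $\mathcal{J}(\vec{\mathcal{X}},\vec B)$ is the Banach space of sequences $\{b_n\}\subset B_0\cap B_1$ with norm $\max\{\|\{b_n\}\|_{\mathcal{X}_0(B_0)},\|\{e^nb_n\}\|_{\mathcal{X}_1(B_1)}\}<\infty$. $\mathbb{A}=\{z\in\mathbb C:1<|z|<e\}$. $\mathcal{F}_{\vec{\mathcal{X}}}(\vec B)$ is the Banach space of analytic functions $f:\mathbb{A}\to B_0+B_1$, $f(z)=\sum_n z^nb_n$ with $\{b_n\}\in\mathcal{J}(\vec{\mathcal{X}},\vec B)$, normed by $\|\{b_n\}\|_{\mathcal J}$. *)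

(* Defs.v *)
From Stdlib Require Import Reals ZArith.
From Coquelicot Require Import Coquelicot.
Open Scope R_scope.

Definition BanachC := CompleteNormedModule C_AbsRing.

Definition seq_plus {B : BanachC} (a b : Z -> B) : Z -> B := fun n => plus (a n) (b n).
Definition seq_scal {B : BanachC} (l : C) (a : Z -> B) : Z -> B := fun n => scal (l : C_AbsRing) (a n).
Definition seq_zero {B : BanachC} : Z -> B := fun _ => zero.
Definition seq_minus {B : BanachC} (a b : Z -> B) : Z -> B := fun n => minus (a n) (b n).
Definition shift {B : BanachC} (k : Z) (b : Z -> B) : Z -> B := fun n => b (n + k)%Z.

Definition is_linear {A B : BanachC} (T : A -> B) : Prop :=
  (forall x y, T (plus x y) = plus (T x) (T y)) /\
  (forall (l : C_AbsRing) x, T (scal l x) = scal l (T x)).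

(* A pseudolattice: to every complex Banach space B a Banach space X(B)
   of two-sided sequences in B, given by a membership predicate and a norm. *)
Record pseudolattice : Type := {
  pl_mem : forall B : BanachC, (Z -> B) -> Prop;
  pl_norm : forall B : BanachC, (Z -> B) -> R;
  pl_zero : forall B, pl_mem B seq_zero;
  pl_plus : forall B a b, pl_mem B a -> pl_mem B b -> pl_mem B (seq_plus a b);
  pl_scal : forall B l a, pl_mem B a -> pl_mem B (seq_scal l a);
  pl_norm_ge0 : forall B a, pl_mem B a -> 0 <= pl_norm B a;
  pl_norm_eq0 : forall B a, pl_mem B a -> pl_norm B a = 0 -> a = seq_zero;
  pl_norm_triangle : forall B a b, pl_mem B a -> pl_mem B b ->
      pl_norm B (seq_plus a b) <= pl_norm B a + pl_norm B b;
  pl_norm_scal : forall B l a, pl_mem B a ->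
      pl_norm B (seq_scal l a) = Cmod l * pl_norm B a;
  pl_complete : forall (B : BanachC) (u : nat -> Z -> B), (forall k, pl_mem B (u k)) ->
      (forall eps, 0 < eps -> exists N, forall p q, (N <= p)%nat -> (N <= q)%nat ->
         pl_norm B (seq_minus (u p) (u q)) < eps) ->
      exists v, pl_mem B v /\
      (forall eps, 0 < eps -> exists N, forall p, (N <= p)%nat ->
         pl_norm B (seq_minus (u p) v) < eps);
  (* closed subspaces: A is identified with its image under a linear isometry
     j : A -> B; X(A) is then (isometrically) a closed subspace of X(B) *)
  pl_subspace : forall (A B : BanachC) (j : A -> B), is_linear j ->
      (forall x, norm (j x) = norm x) ->
      (forall a, pl_mem A a -> pl_mem B (fun n => j (a n)) /\
                 pl_norm B (fun n => j (a n)) = pl_norm A a) /\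
      (forall (u : nat -> Z -> A) (v : Z -> B), (forall k, pl_mem A (u k)) ->
         pl_mem B v ->
         (forall eps, 0 < eps -> exists N, forall p, (N <= p)%nat ->
            pl_norm B (seq_minus (fun n => j (u p n)) v) < eps) ->
         exists a, pl_mem A a /\ v = (fun n => j (a n)));
  (* bounded operators; M is any bound for the operator norm of T *)
  pl_const : R;
  pl_operator : forall (A B : BanachC) (T : A -> B) (M : R), is_linear T ->
      0 <= M -> (forall x, norm (T x) <= M * norm x) ->
      forall a, pl_mem A a -> pl_mem B (fun n => T (a n)) /\
        pl_norm B (fun n => T (a n)) <= pl_const * M * pl_norm A a;
  pl_coord : forall (B : BanachC) a, pl_mem B a -> forall m, norm (a m) <= pl_norm B a
}.

Definition translation_invariant (X : pseudolattice) : Prop :=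
  forall (B : BanachC) (k : Z) (b : Z -> B),
    (pl_mem X B b <-> pl_mem X B (shift k b)) /\
    (pl_mem X B b -> pl_norm X B (shift k b) = pl_norm X B b).

(* A complex Banach couple: B0, B1 linearly and injectively placed in a common
   complex vector space U, compatibly (the K-functional K(1,.) on B0+B1 is
   definite, i.e. B0+B1 is a Hausdorff normed space). *)
Record couple : Type := {
  cU : ModuleSpace C_AbsRing;
  cB0 : BanachC;
  cB1 : BanachC;
  i0 : cB0 -> cU;
  i1 : cB1 -> cU;
  i0_plus : forall x y, i0 (plus x y) = plus (i0 x) (i0 y);
  i0_scal : forall (l : C_AbsRing) x, i0 (scal l x) = scal l (i0 x);
  i1_plus : forall x y, i1 (plus x y) = plus (i1 x) (i1 y);
  i1_scal : forall (l : C_AbsRing) x, i1 (scal l x) = scal l (i1 x);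
  i0_inj : forall x y, i0 x = i0 y -> x = y;
  i1_inj : forall x y, i1 x = i1 y -> x = y;
  c_hausdorff : forall x : cU,
    (forall eps, 0 < eps -> exists a b, x = plus (i0 a) (i1 b) /\ norm a + norm b < eps) ->
    x = zero
}.

(* K(1, x) < r, the norm of B0 + B1 *)
Definition Klt (cp : couple) (x : cU cp) (r : R) : Prop :=
  exists (a : cB0 cp) (b : cB1 cp), x = plus (i0 cp a) (i1 cp b) /\ norm a + norm b < r.

Definition Kseries (cp : couple) (u : nat -> cU cp) (x : cU cp) : Prop :=
  forall eps, 0 < eps -> exists N, forall n, (N <= n)%nat ->
    Klt cp (minus x (sum_n u n)) eps.

Definition zpowC (z : C) (n : Z) : C :=
  match n with
  | Z0 => RtoC 1
  | Zpos p => pow_n (z : C_Ring) (Pos.to_nat p)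
  | Zneg p => pow_n ((/ z)%C : C_Ring) (Pos.to_nat p)
  end.

Definition laurent_sum (cp : couple) (h : Z -> cU cp) (z : C) (x : cU cp) : Prop :=
  exists xp xm : cU cp,
    Kseries cp (fun n => scal (zpowC z (Z.of_nat n) : C_AbsRing) (h (Z.of_nat n))) xp /\
    Kseries cp (fun n => scal (zpowC z (- Z.of_nat (S n)) : C_AbsRing)
                              (h (- Z.of_nat (S n))%Z)) xm /\
    x = plus xp xm.

Definition Kderiv (cp : couple) (f : C -> cU cp) (s : C) (l : cU cp) : Prop :=
  forall eps, 0 < eps -> exists del, 0 < del /\
    forall z : C, Cmod (z - s)%C < del -> z <> s ->
      Klt cp (minus (minus (f z) (f s)) (scal ((z - s)%C : C_AbsRing) l)) (eps * Cmod (z - s)%C).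

Definition inA (z : C) : Prop := 1 < Cmod z < exp 1.

Definition eweight {B : BanachC} (c : Z -> B) : Z -> B :=
  fun n => scal (RtoC (exp (IZR n)) : C_AbsRing) (c n).

(* {b_n} in J(X, B): a sequence in B0 ∩ B1, given by its B0 and B1 representatives *)
Definition inJ (X0 X1 : pseudolattice) (cp : couple) (a : Z -> cB0 cp) (c : Z -> cB1 cp) : Prop :=
  (forall n, i0 cp (a n) = i1 cp (c n)) /\
  pl_mem X0 (cB0 cp) a /\ pl_mem X1 (cB1 cp) (eweight c).

Definition Jnorm (X0 X1 : pseudolattice) (cp : couple) (a : Z -> cB0 cp) (c : Z -> cB1 cp) : R :=
  Rmax (pl_norm X0 (cB0 cp) a) (pl_norm X1 (cB1 cp) (eweight c)).

Definition delta (s : C) : R := Rmax (/ (Cmod s - 1)) (/ (exp 1 - Cmod s)).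

(* Main.v *)
Require Import Defs.
From Stdlib Require Import Reals ZArith.
From Coquelicot Require Import Coquelicot.
Open Scope R_scope.

From Stdlib Require Import Lra Lia FunctionalExtensionality Classical.
Require Import Defs.


Lemma pow_decr (q : R) m n : 0 <= q <= 1 -> (m <= n)%nat -> q ^ n <= q ^ m.
Proof.
  intros Hq H. induction H. lra. simpl. pose proof (pow_le q m0 ltac:(lra)). nra.
Qed.

Section NM.
Context {B : NormedModule C_AbsRing}.

Definition conv (u : nat -> B) (l : B) : Prop :=
  forall eps, 0 < eps -> exists N, forall n, (N <= n)%nat -> norm (minus (u n) l) < eps.

Lemma norm_minus_sym (x y : B) : norm (minus x y) = norm (minus y x).
Proof. rewrite <- opp_minus, norm_opp; reflexivity. Qed.

Lemma norm_minus_tri (x y z : B) : norm (minus x z) <= norm (minus x y) + norm (minus y z).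
Proof.
  replace (minus x z) with (plus (minus x y) (minus y z)).
  apply norm_triangle.
  unfold minus. rewrite <- plus_assoc. f_equal. rewrite plus_assoc, plus_opp_l, plus_zero_l. auto.
Qed.

Lemma norm_le_minus (x y : B) : norm x <= norm (minus x y) + norm y.
Proof.
  pose proof (norm_minus_tri x y zero).
  rewrite !(@minus_zero_r (NormedModule.AbelianGroup _ B)) in H. exact H.
Qed.

Lemma norm_minus_self (x : B) : norm (minus x x) = 0.
Proof. rewrite minus_eq_zero. apply norm_zero. Qed.

Lemma minus_zero_eq (x y : B) : minus x y = zero -> x = y.
Proof.
  intro H. apply plus_reg_r with (opp y). rewrite plus_opp_r. exact H.
Qed.

Lemma norm_small_zero (x : B) : (forall eps, 0 < eps -> norm x < eps) -> x = zero.
Proof.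
  intro H. apply norm_eq_zero. destruct (Rle_lt_dec (norm x) 0).
  pose proof (norm_ge_0 x); lra.
  specialize (H _ r); lra.
Qed.

Lemma conv_unique u l1 l2 : conv u l1 -> conv u l2 -> l1 = l2.
Proof.
  intros H1 H2. apply minus_zero_eq, norm_small_zero. intros eps He.
  destruct (H1 (eps/2)) as [N1 HN1]; [lra|]. destruct (H2 (eps/2)) as [N2 HN2]; [lra|].
  assert (h1 : (N1 <= N1+N2)%nat) by lia. assert (h2 : (N2 <= N1+N2)%nat) by lia.
  specialize (HN1 _ h1). specialize (HN2 _ h2).
  pose proof (norm_minus_tri l1 (u (N1+N2)%nat) l2). rewrite norm_minus_sym in HN1. lra.
Qed.

Lemma conv_ext u v l : (forall n, u n = v n) -> conv u l -> conv v l.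
Proof. intros He H eps Hp; destruct (H eps Hp) as [N HN]; exists N; intros; rewrite <- He; auto. Qed.

Lemma conv_S u l : conv u l -> conv (fun n => u (S n)) l.
Proof. intros H eps Hp; destruct (H eps Hp) as [N HN]; exists N; intros; apply HN; lia. Qed.

Lemma minus_plus_plus (a b c d : B) : minus (plus a b) (plus c d) = plus (minus a c) (minus b d).
Proof.
  unfold minus. rewrite (@opp_plus B). rewrite !plus_assoc. f_equal.
  rewrite <- !plus_assoc. f_equal. apply plus_comm.
Qed.

Lemma conv_plus u v a b : conv u a -> conv v b -> conv (fun n => plus (u n) (v n)) (plus a b).
Proof.
  intros H1 H2 eps He.
  destruct (H1 (eps/2)) as [N1 HN1]; [lra|]. destruct (H2 (eps/2)) as [N2 HN2]; [lra|].
  exists (N1+N2)%nat; intros n Hn. rewrite minus_plus_plus.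
  eapply Rle_lt_trans. apply norm_triangle.
  assert (h1 : (N1 <= n)%nat) by lia. assert (h2 : (N2 <= n)%nat) by lia.
  specialize (HN1 _ h1). specialize (HN2 _ h2). lra.
Qed.

Lemma nscal_opp_r (l : C_AbsRing) (y : B) : scal l (opp y) = opp (scal l y).
Proof. exact (@scal_opp_r _ (NormedModule.ModuleSpace _ B) l y). Qed.
Lemma nscal_distr_l (l : C_AbsRing) (x y : B) : scal l (plus x y) = plus (scal l x) (scal l y).
Proof. exact (@scal_distr_l _ (NormedModule.ModuleSpace _ B) l x y). Qed.
Lemma nscal_distr_r (l m : C_AbsRing) (x : B) : scal (plus l m) x = plus (scal l x) (scal m x).
Proof. exact (@scal_distr_r _ (NormedModule.ModuleSpace _ B) l m x). Qed.
Lemma nscal_assoc (l m : C_AbsRing) (x : B) : scal l (scal m x) = scal (mult l m) x.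
Proof. exact (@scal_assoc _ (NormedModule.ModuleSpace _ B) l m x). Qed.
Lemma nscal_one (x : B) : scal (one : C_AbsRing) x = x.
Proof. exact (@scal_one _ (NormedModule.ModuleSpace _ B) x). Qed.
Lemma nscal_zero_r (l : C_AbsRing) : scal l (zero : B) = zero.
Proof. exact (@scal_zero_r _ (NormedModule.ModuleSpace _ B) l). Qed.
Lemma nscal_zero_l (x : B) : scal (zero : C_AbsRing) x = zero.
Proof. exact (@scal_zero_l _ (NormedModule.ModuleSpace _ B) x). Qed.
Lemma nscal_opp_one (x : B) : scal (opp one : C_AbsRing) x = opp x.
Proof. exact (@scal_opp_one _ (NormedModule.ModuleSpace _ B) x). Qed.

Lemma minus_scal (l : C_AbsRing) (x y : B) : minus (scal l x) (scal l y) = scal l (minus x y).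
Proof. unfold minus. rewrite nscal_distr_l, nscal_opp_r. auto. Qed.

Lemma norm_scal_C (l : C) (x : B) : norm (scal (l : C_AbsRing) x) <= Cmod l * norm x.
Proof. exact (@norm_scal C_AbsRing B l x). Qed.

Lemma conv_scal u a (l : C) : conv u a -> conv (fun n => scal (l : C_AbsRing) (u n)) (scal (l : C_AbsRing) a).
Proof.
  intros H eps He.
  destruct (H (eps / (Cmod l + 1))) as [N HN].
  { apply Rdiv_lt_0_compat; auto. pose proof (Cmod_ge_0 l); lra. }
  exists N; intros n Hn. rewrite minus_scal. eapply Rle_lt_trans. apply norm_scal_C.
  specialize (HN n Hn). pose proof (Cmod_ge_0 l). pose proof (norm_ge_0 (minus (u n) a)).
  apply Rle_lt_trans with ((Cmod l + 1) * norm (minus (u n) a)). nra.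
  apply Rmult_lt_compat_l with (r := Cmod l + 1) in HN; [|lra].
  replace ((Cmod l + 1) * (eps / (Cmod l + 1))) with eps in HN; [lra| field; lra].
Qed.

Lemma conv_norm_le u a K : conv u a -> (forall n, norm (u n) <= K) -> norm a <= K.
Proof.
  intros H Hb. destruct (Rle_lt_dec (norm a) K) as [h|h]; auto.
  destruct (H (norm a - K)) as [N HN]; [lra|]. specialize (HN N (le_n _)).
  pose proof (norm_le_minus a (u N)).
  rewrite norm_minus_sym in HN. specialize (Hb N). lra.
Qed.

Lemma geom_partial (a : nat -> B) (M q : R) : 0 <= q < 1 ->
  (forall k, norm (a k) <= M * q ^ k) ->
  forall m n, (m <= n)%nat -> norm (minus (sum_n a n) (sum_n a m)) <= M * (q ^ (S m) - q ^ (S n)) / (1 - q).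
Proof.
  intros Hq Ha m n Hmn. induction Hmn.
  - rewrite norm_minus_self. replace (M * (q ^ S m - q ^ S m) / (1 - q)) with 0 by (field; lra). lra.
  - rewrite sum_Sn. 
    replace (minus (plus (sum_n a m0) (a (S m0))) (sum_n a m)) with (plus (minus (sum_n a m0) (sum_n a m)) (a (S m0))).
    2:{ unfold minus. rewrite <- !plus_assoc. f_equal. apply plus_comm. }
    eapply Rle_trans. apply norm_triangle.
    replace (M * (q ^ S m - q ^ S (S m0)) / (1 - q)) with (M * (q ^ S m - q ^ S m0) / (1 - q) + M * q ^ (S m0)).
    specialize (Ha (S m0)). lra.
    simpl. field. lra.
Qed.

Lemma geom_series (Hc : forall u : nat -> B,
  (forall eps, 0 < eps -> exists N, forall m n, (N <= m)%nat -> (N <= n)%nat -> norm (minus (u n) (u m)) < eps) ->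
  exists l, conv u l) (a : nat -> B) (M q : R) : 0 <= q < 1 ->
  (forall k, norm (a k) <= M * q ^ k) ->
  exists l, conv (sum_n a) l /\ norm l <= M / (1 - q).
Proof.
  intros Hq Ha.
  assert (HM : 0 <= M). { specialize (Ha 0%nat). simpl in Ha. pose proof (norm_ge_0 (a 0%nat)). lra. }
  destruct (Hc (sum_n a)) as [l Hl].
  { intros eps He.
    assert (Hlim : exists N, M * q ^ N / (1 - q) < eps).
    { destruct (Req_dec M 0) as [h|h].
      - exists 0%nat. rewrite h. replace (0 * q ^ 0 / (1 - q)) with 0 by (field; lra). lra.
      - destruct (pow_lt_1_zero q ltac:(rewrite Rabs_pos_eq; lra) (eps * (1 - q) / M)) as [N HN].
        { apply Rdiv_lt_0_compat; nra. }
        exists N. specialize (HN N (le_n _)). rewrite Rabs_pos_eq in HN by (apply pow_le; lra).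
        apply Rmult_lt_compat_l with (r := M / (1-q)) in HN.
        replace (M / (1 - q) * (eps * (1 - q) / M)) with eps in HN by (field; lra).
        replace (M * q ^ N / (1 - q)) with (M / (1 - q) * q ^ N) by (field; lra). lra.
        apply Rdiv_lt_0_compat; lra. }
    destruct Hlim as [N HN]. exists N. intros m n Hm Hn.
    assert (Hqq : forall k, (N <= k)%nat -> q ^ k <= q ^ N).
    { intros k Hk. apply pow_decr; auto; lra. }
    destruct (le_lt_dec m n) as [h|h].
    - eapply Rle_lt_trans. apply geom_partial; eauto.
      assert (q ^ S m <= q ^ N) by (apply Hqq; lia). pose proof (pow_le q (S n) ltac:(lra)).
      apply Rle_lt_trans with (M * q ^ N / (1 - q)); auto.
      unfold Rdiv. apply Rmult_le_compat_r. left; apply Rinv_0_lt_compat; lra. nra.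
    - rewrite norm_minus_sym. eapply Rle_lt_trans. apply geom_partial; eauto; lia.
      assert (q ^ S n <= q ^ N) by (apply Hqq; lia). pose proof (pow_le q (S m) ltac:(lra)).
      apply Rle_lt_trans with (M * q ^ N / (1 - q)); auto.
      unfold Rdiv. apply Rmult_le_compat_r. left; apply Rinv_0_lt_compat; lra. nra. }
  exists l. split; auto. apply (conv_norm_le _ _ _ Hl). intro n.
  induction n.
  - simpl. rewrite sum_O. specialize (Ha 0%nat). simpl in Ha.
    apply Rle_trans with M. lra. apply Rmult_le_reg_r with (1-q). lra.
    replace (M / (1 - q) * (1 - q)) with M by (field; lra). nra.
  - pose proof (geom_partial a M q Hq Ha 0 (S n) ltac:(lia)).
    pose proof (norm_le_minus (sum_n a (S n)) (sum_n a 0)) as H0.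
    rewrite sum_O in H0. specialize (Ha 0%nat). simpl in Ha.
    assert (M * (q ^ 1 - q ^ S (S n)) / (1 - q) + M * 1 <= M / (1 - q)).
    { replace (M * (q ^ 1 - q ^ S (S n)) / (1 - q) + M * 1) with (M / (1-q) - M * q ^ S (S n) / (1-q)) by (simpl; field; lra).
      assert (0 <= M * q ^ S (S n) / (1 - q)). { apply Rdiv_le_0_compat. apply Rmult_le_pos; auto. apply pow_le; lra. lra. }
      lra. }
    rewrite sum_O in H. lra.
Qed.

End NM.

Section CNM.
Context {B : CompleteNormedModule C_AbsRing}.

Lemma cauchy_conv (u : nat -> B) :
  (forall eps, 0 < eps -> exists N, forall m n, (N <= m)%nat -> (N <= n)%nat -> norm (minus (u n) (u m)) < eps) ->
  exists l, conv u l.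
Proof.
  intro H.
  destruct (proj1 (filterlim_locally_cauchy (F := eventually) u)) as [l Hl].
  { intro eps. destruct (H eps (cond_pos eps)) as [N HN].
    exists (fun n => (N <= n)%nat). split. exists N; auto.
    intros m n Hm Hn. apply (@norm_compat1 C_AbsRing (CompleteNormedModule.NormedModule _ B)). apply HN; auto. }
  exists l. intros eps He.
  destruct (proj1 (filterlim_locally_ball_norm _ _) Hl (mkposreal eps He)) as [N HN].
  exists N. intros n Hn. apply HN; auto.
Qed.


Lemma geom_seriesC (a : nat -> B) (M q : R) : 0 <= q < 1 ->
  (forall k, norm (a k) <= M * q ^ k) ->
  exists l, conv (sum_n a) l /\ norm l <= M / (1 - q).
Proof. intros H H0. exact (@geom_series (CompleteNormedModule.NormedModule _ B) cauchy_conv a M q H H0). Qed.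
End CNM.


Section G. Context {G : AbelianGroup}.
Local Notation M := (AbelianGroup.AbelianMonoid G).
Lemma alg_tel_g (x y z : G) : minus x z = plus (minus y z) (minus x y).
Proof. unfold minus. rewrite (@plus_comm M y). rewrite (@plus_assoc M). rewrite (@plus_comm M _ x). rewrite <- !(@plus_assoc M). f_equal.
 rewrite plus_opp_r, plus_zero_r. auto. Qed.
Lemma alg_back_g (x y : G) : x = plus y (opp (minus y x)).
Proof. rewrite opp_minus. unfold minus. rewrite (@plus_assoc M). rewrite (@plus_comm M y x). rewrite <- (@plus_assoc M), plus_opp_r, plus_zero_r. auto. Qed.
End G.

Section NM2.
Context {B : NormedModule C_AbsRing}.
Lemma alg_minus_scal (x y : B) : minus x y = plus x (scal (opp one : C_AbsRing) y).
Proof. rewrite nscal_opp_one. reflexivity. Qed.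
Lemma alg_rec (c x y : B) (q : C_AbsRing) : minus (plus c (scal q x)) (plus c (scal q y)) = scal q (minus x y).
Proof. rewrite minus_plus_plus, minus_eq_zero, plus_zero_l. apply (minus_scal q x y). Qed.
Lemma alg_tel (x y z : B) : minus x z = plus (minus y z) (minus x y).
Proof. exact (@alg_tel_g (NormedModule.AbelianGroup _ B) x y z). Qed.
Lemma alg_back (x y : B) : x = plus y (scal (opp one : C_AbsRing) (minus y x)).
Proof. rewrite nscal_opp_one. exact (@alg_back_g (NormedModule.AbelianGroup _ B) x y). Qed.
End NM2.

Lemma Cmod_m1 : Cmod (opp one : C_AbsRing) = 1.
Proof. change (Cmod (-(1))%C = 1). rewrite Cmod_opp. apply Cmod_1. Qed.

Section PL.
Variable X : pseudolattice.
Hypothesis hX : translation_invariant X.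
Variable B : BanachC.
Local Notation NB := (CompleteNormedModule.NormedModule C_AbsRing B).

Lemma pl_minus (a b : Z -> B) : pl_mem X B a -> pl_mem X B b -> pl_mem X B (seq_minus a b).
Proof.
  intros ha hb. replace (seq_minus a b) with (seq_plus a (seq_scal (opp one) b)).
  apply pl_plus; auto. apply pl_scal; auto.
  apply functional_extensionality; intro n. unfold seq_plus, seq_scal, seq_minus.
  symmetry. exact (@alg_minus_scal (CompleteNormedModule.NormedModule _ B) (a n) (b n)).
Qed.

Lemma pl_norm_minus_sym (a b : Z -> B) : pl_mem X B a -> pl_mem X B b ->
  pl_norm X B (seq_minus a b) = pl_norm X B (seq_minus b a).
Proof.
  intros ha hb. replace (seq_minus a b) with (seq_scal (opp one) (seq_minus b a)).
  rewrite pl_norm_scal by (apply pl_minus; auto). change (Cmod (opp one : C_AbsRing) * pl_norm X B (seq_minus b a) = pl_norm X B (seq_minus b a)).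
  rewrite Cmod_m1. ring.
  apply functional_extensionality; intro n. unfold seq_scal, seq_minus.
  rewrite (@nscal_opp_one (CompleteNormedModule.NormedModule _ B)). exact (@opp_minus (CompleteNormedModule.AbelianGroup _ B) _ _).
Qed.

Lemma pl_shift_mem (k : Z) (b : Z -> B) : pl_mem X B b -> pl_mem X B (shift k b).
Proof. intro h. apply (proj1 (hX B k b)); auto. Qed.
Lemma pl_shift_norm (k : Z) (b : Z -> B) : pl_mem X B b -> pl_norm X B (shift k b) = pl_norm X B b.
Proof. intro h. apply (proj2 (hX B k b)); auto. Qed.

Variables (a : Z -> B) (w q : C) (o d : Z).
Hypothesis ha : pl_mem X B a.
Hypothesis hq : Cmod q < 1.

Fixpoint PP (N : nat) : Z -> B :=
  match N with
  | O => seq_zero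
  | S N => fun n => plus (scal (w : C_AbsRing) (a (n + o)%Z)) (scal (q : C_AbsRing) (PP N (n + d)%Z))
  end.

Lemma PP_S N : PP (S N) = seq_plus (seq_scal w (shift o a)) (seq_scal q (shift d (PP N))).
Proof. reflexivity. Qed.

Lemma PP_mem N : pl_mem X B (PP N).
Proof.
  induction N. apply pl_zero. rewrite PP_S. apply pl_plus; apply pl_scal; apply pl_shift_mem; auto.
Qed.

Definition DD N := seq_minus (PP (S N)) (PP N).

Lemma DD_mem N : pl_mem X B (DD N).
Proof. apply pl_minus; apply PP_mem. Qed.

Lemma DD_S N : DD (S N) = seq_scal q (shift d (DD N)).
Proof.
  apply functional_extensionality; intro n. unfold DD, seq_scal, shift, seq_minus. simpl.
  exact (@alg_rec (CompleteNormedModule.NormedModule _ B) _ _ _ _).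
Qed.

Lemma DD_norm N : pl_norm X B (DD N) <= Cmod q ^ N * (Cmod w * pl_norm X B a).
Proof.
  induction N.
  - simpl. rewrite Rmult_1_l. unfold DD.
    replace (seq_minus (PP 1) (PP 0)) with (seq_scal w (shift o a)).
    rewrite pl_norm_scal, pl_shift_norm; auto. lra. apply pl_shift_mem; auto.
    apply functional_extensionality; intro n. unfold seq_scal, shift, seq_minus. simpl.
    unfold seq_zero. rewrite (@nscal_zero_r (CompleteNormedModule.NormedModule _ B)).
    rewrite plus_zero_r. symmetry. exact (@minus_zero_r (CompleteNormedModule.AbelianGroup _ B) _).
  - rewrite DD_S, pl_norm_scal, pl_shift_norm. simpl.
    pose proof (Cmod_ge_0 q). nra. apply DD_mem. apply pl_shift_mem, DD_mem.
Qed.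

Lemma PP_diff m n : (m <= n)%nat -> pl_norm X B (seq_minus (PP n) (PP m)) <=
   Cmod w * pl_norm X B a * (Cmod q ^ m - Cmod q ^ n) / (1 - Cmod q).
Proof.
  intro H. pose proof (Cmod_ge_0 q). pose proof (pl_norm_ge0 X B a ha). pose proof (Cmod_ge_0 w).
  induction H.
  - replace (seq_minus (PP m) (PP m)) with (@seq_zero B).
    replace (pl_norm X B seq_zero) with 0.
    replace (Cmod w * pl_norm X B a * (Cmod q ^ m - Cmod q ^ m) / (1 - Cmod q)) with 0 by (field; lra). lra.
    { replace (@seq_zero B) with (seq_scal (0%R : C) (@seq_zero B)).
      rewrite pl_norm_scal. rewrite Cmod_0. ring. apply pl_zero.
      apply functional_extensionality; intro n. unfold seq_scal, seq_zero.
      exact (@nscal_zero_r (CompleteNormedModule.NormedModule _ B) _). }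
    apply functional_extensionality; intro n. unfold seq_minus, seq_zero. symmetry. exact (@minus_eq_zero (CompleteNormedModule.AbelianGroup _ B) _).
  - replace (seq_minus (PP (S m0)) (PP m)) with (seq_plus (seq_minus (PP m0) (PP m)) (DD m0)).
    eapply Rle_trans. apply pl_norm_triangle. apply pl_minus; apply PP_mem. apply DD_mem.
    pose proof (DD_norm m0).
    replace (Cmod w * pl_norm X B a * (Cmod q ^ m - Cmod q ^ S m0) / (1 - Cmod q)) with
      (Cmod w * pl_norm X B a * (Cmod q ^ m - Cmod q ^ m0) / (1 - Cmod q) + Cmod q ^ m0 * (Cmod w * pl_norm X B a)).
    lra. simpl. field. lra.
    apply functional_extensionality; intro n. unfold seq_plus, DD, seq_minus. symmetry.
    exact (@alg_tel (CompleteNormedModule.NormedModule _ B) _ _ _).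
Qed.

Lemma pl_series : exists v : Z -> B, pl_mem X B v /\
   pl_norm X B v <= Cmod w / (1 - Cmod q) * pl_norm X B a /\
   forall n, v n = plus (scal (w : C_AbsRing) (a (n + o)%Z)) (scal (q : C_AbsRing) (v (n + d)%Z)).
Proof.
  pose proof (Cmod_ge_0 q). pose proof (pl_norm_ge0 X B a ha). pose proof (Cmod_ge_0 w).
  set (K := Cmod w * pl_norm X B a).
  assert (HK : 0 <= K) by (unfold K; nra).
  destruct (pl_complete X B PP PP_mem) as [v [hv Hv]].
  { intros eps He.
    assert (Hlim : exists N, K * Cmod q ^ N / (1 - Cmod q) < eps).
    { destruct (Req_dec K 0) as [h|h].
      - exists 0%nat. rewrite h. replace (0 * Cmod q ^ 0 / (1 - Cmod q)) with 0 by (field; lra). lra.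
      - destruct (pow_lt_1_zero (Cmod q) ltac:(rewrite Rabs_pos_eq; lra) (eps * (1 - Cmod q) / K)) as [N HN].
        { apply Rdiv_lt_0_compat; nra. }
        exists N. specialize (HN N (le_n _)). rewrite Rabs_pos_eq in HN by (apply pow_le; lra).
        apply Rmult_lt_compat_l with (r := K / (1-Cmod q)) in HN.
        replace (K / (1 - Cmod q) * (eps * (1 - Cmod q) / K)) with eps in HN by (field; lra).
        replace (K * Cmod q ^ N / (1 - Cmod q)) with (K / (1 - Cmod q) * Cmod q ^ N) by (field; lra). lra.
        apply Rdiv_lt_0_compat; lra. }
    destruct Hlim as [N HN]. exists N. intros m n Hm Hn.
    assert (Hgen : forall m n, (N <= m)%nat -> (m <= n)%nat -> pl_norm X B (seq_minus (PP n) (PP m)) < eps).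
    { intros m' n' Hm' Hmn. eapply Rle_lt_trans. apply PP_diff; auto.
      assert (Cmod q ^ m' <= Cmod q ^ N) by (apply pow_decr; auto; lra).
      pose proof (pow_le (Cmod q) n' ltac:(lra)).
      apply Rle_lt_trans with (K * Cmod q ^ N / (1 - Cmod q)); auto. fold K.
      unfold Rdiv. apply Rmult_le_compat_r. left; apply Rinv_0_lt_compat; lra. nra. }
    destruct (le_lt_dec m n) as [h|h].
    - rewrite pl_norm_minus_sym by apply PP_mem. apply Hgen; auto.
    - apply Hgen; auto; lia. }
  exists v. split; [auto|split].
  -
    apply Rle_trans with (K / (1 - Cmod q)).
    2:{ unfold K. apply Req_le. field. lra. }
    destruct (Rle_lt_dec (pl_norm X B v) (K / (1 - Cmod q))) as [h|h]; auto.
    destruct (Hv (pl_norm X B v - K / (1 - Cmod q))) as [N HN]; [lra|].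
    specialize (HN N (le_n _)).
    assert (HPN : pl_norm X B (PP N) <= K / (1 - Cmod q)).
    { pose proof (PP_diff 0 N ltac:(lia)).
      replace (seq_minus (PP N) (PP 0)) with (PP N) in H2.
      simpl in H2. fold K in H2. apply Rle_trans with (1 := H2).
      unfold Rdiv. apply Rmult_le_compat_r. left; apply Rinv_0_lt_compat; lra.
      pose proof (pow_le (Cmod q) N ltac:(lra)). nra.
      apply functional_extensionality; intro n. unfold seq_minus, seq_zero. simpl. symmetry. exact (@minus_zero_r (CompleteNormedModule.AbelianGroup _ B) _). }
    assert (Heq : seq_plus (PP N) (seq_scal (opp one) (seq_minus (PP N) v)) = v).
    { apply functional_extensionality; intro n. unfold seq_plus, seq_scal, seq_minus. symmetry.
      exact (@alg_back (CompleteNormedModule.NormedModule _ B) _ _). }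
    pose proof (pl_norm_triangle X B (PP N) (seq_scal (opp one) (seq_minus (PP N) v)) (PP_mem N)
      ltac:(apply pl_scal; apply pl_minus; auto; apply PP_mem)).
    rewrite pl_norm_scal in H2 by (apply pl_minus; auto; apply PP_mem).
    rewrite Heq in H2.
    match type of H2 with context [Cmod ?c] => replace (Cmod c) with 1 in H2 by (symmetry; exact Cmod_m1) end. lra.
  - intro n.
    assert (Hc : forall m, @conv NB (fun p => PP p m) (v m)).
    { intros m eps He. destruct (Hv eps He) as [N HN]. exists N. intros p Hp.
      eapply Rle_lt_trans. 2: apply (HN p Hp).
      apply (pl_coord X B (seq_minus (PP p) v)). apply pl_minus; auto. apply PP_mem. }
    apply (@conv_unique NB (fun p => PP (S p) n)).
    apply (@conv_S NB (fun p => PP p n)), Hc.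
    apply (@conv_ext NB (fun p => plus (scal (w : C_AbsRing) (a (n + o)%Z)) (scal (q : C_AbsRing) (PP p (n + d)%Z)))).
    reflexivity.
    apply (@conv_plus NB). intros eps He. exists 0%nat. intros. rewrite (@norm_minus_self NB). auto.
    apply (@conv_scal NB), Hc.
Qed.

End PL.


Definition zp (z : C) (n : nat) : C := zpowC z (Z.of_nat n).
Definition zm (z : C) (n : nat) : C := zpowC z (- Z.of_nat (S n)).

Lemma zp_Cpow z n : zp z n = Cpow z n.
Proof.
  unfold zp, zpowC. destruct n. reflexivity.
  simpl Z.of_nat. change (pow_n z (Pos.to_nat (PosDef.Pos.of_succ_nat n)) = Cpow z (S n)).
  replace (Pos.to_nat (PosDef.Pos.of_succ_nat n)) with (S n) by (symmetry; apply SuccNat2Pos.id_succ). generalize (S n). clear n.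
  induction n; simpl; try rewrite IHn; auto.
Qed.

Lemma zm_Cpow z n : zm z n = Cpow (/ z) (S n).
Proof.
  unfold zm, zpowC. simpl Z.of_nat. simpl Z.opp. change (pow_n (/z)%C (Pos.to_nat (PosDef.Pos.of_succ_nat n)) = Cpow (/z) (S n)).
  replace (Pos.to_nat (PosDef.Pos.of_succ_nat n)) with (S n) by (symmetry; apply SuccNat2Pos.id_succ).
  generalize (S n). clear n. induction n; simpl; try rewrite IHn; auto.
Qed.

Lemma Cmod_Cpow z n : Cmod (Cpow z n) = Cmod z ^ n.
Proof. induction n; simpl. apply Cmod_1. rewrite Cmod_mult, IHn. auto. Qed.

Section BW.
Variable B : BanachC.
Lemma Bplus_comm (x y : B) : plus x y = plus y x. Proof. apply plus_comm. Qed.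
Lemma Bplus_assoc (x y z : B) : plus x (plus y z) = plus (plus x y) z. Proof. apply plus_assoc. Qed.
Lemma Bscal_distr_l (a : C) (x y : B) : scal (a : C_AbsRing) (plus x y) = plus (scal (a : C_AbsRing) x) (scal (a : C_AbsRing) y).
Proof. exact (@scal_distr_l _ (CompleteNormedModule.ModuleSpace _ B) a x y). Qed.
Lemma Bscal_assoc (a b : C) (x : B) : scal (a : C_AbsRing) (scal (b : C_AbsRing) x) = scal ((a * b)%C : C_AbsRing) x.
Proof. exact (@scal_assoc _ (CompleteNormedModule.ModuleSpace _ B) a b x). Qed.
Lemma Bscal_one (x : B) : scal (RtoC 1 : C_AbsRing) x = x.
Proof. exact (@scal_one _ (CompleteNormedModule.ModuleSpace _ B) x). Qed.
Lemma Bscal_zero (x : B) : scal (RtoC 0 : C_AbsRing) x = zero.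
Proof. exact (@scal_zero_l _ (CompleteNormedModule.ModuleSpace _ B) x). Qed.
Lemma Bscal_m1 (x : B) : scal (RtoC (-1) : C_AbsRing) x = opp x.
Proof.
  replace (RtoC (-1)) with (opp (one : C_AbsRing)). exact (@scal_opp_one _ (CompleteNormedModule.ModuleSpace _ B) x).
  apply injective_projections; simpl; lra.
Qed.
Lemma Bnorm_scal (a : C) (x : B) : norm (scal (a : C_AbsRing) x) <= Cmod a * norm x.
Proof. exact (@norm_scal _ (CompleteNormedModule.NormedModule _ B) a x). Qed.
Lemma Bminus_scal (a : C) (x y : B) : minus (scal (a : C_AbsRing) x) (scal (a : C_AbsRing) y) = scal (a : C_AbsRing) (minus x y).
Proof. exact (@minus_scal (CompleteNormedModule.NormedModule _ B) a x y). Qed.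
Lemma Bnorm_zero : norm (zero : B) = 0.
Proof. exact (@norm_zero _ (CompleteNormedModule.NormedModule _ B)). Qed.
Lemma Bnorm_opp (x : B) : norm (opp x) = norm x.
Proof. exact (@norm_opp _ (CompleteNormedModule.NormedModule _ B) x). Qed.
Lemma Bnorm_triangle (x y : B) : norm (plus x y) <= norm x + norm y.
Proof. exact (@norm_triangle _ (CompleteNormedModule.NormedModule _ B) x y). Qed.
Lemma Bnorm_minus_sym (x y : B) : norm (minus x y) = norm (minus y x).
Proof. exact (@norm_minus_sym (CompleteNormedModule.NormedModule _ B) x y). Qed.
End BW.

Section UW.
Variable cp : couple.
Local Notation U := (cU cp).
Local Notation B0 := (cB0 cp).
Local Notation B1 := (cB1 cp).
Local Notation UG := (ModuleSpace.AbelianGroup (AbsRing.Ring C_AbsRing) (cU cp)).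

Lemma Uplus_comm (x y : U) : plus x y = plus y x. Proof. apply plus_comm. Qed.
Lemma Uplus_assoc (x y z : U) : plus x (plus y z) = plus (plus x y) z. Proof. apply plus_assoc. Qed.
Lemma Uplus_zero_r (x : U) : plus x zero = x. Proof. apply plus_zero_r. Qed.
Lemma Uplus_zero_l (x : U) : plus zero x = x. Proof. apply plus_zero_l. Qed.
Lemma Uplus_opp_r (x : U) : plus x (opp x) = zero. Proof. exact (@plus_opp_r UG x). Qed.
Lemma Uminus (x y : U) : minus x y = plus x (opp y). Proof. reflexivity. Qed.
Lemma Uopp_plus (x y : U) : opp (plus x y) = plus (opp x) (opp y). Proof. exact (@opp_plus UG x y). Qed.
Lemma Uopp_opp (x : U) : opp (opp x) = x. Proof. exact (@opp_opp UG x). Qed.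
Lemma Uplus_reg_l (r x y : U) : plus r x = plus r y -> x = y. Proof. exact (@plus_reg_l UG r x y). Qed.
Lemma Uscal_distr_l (a : C) (x y : U) : scal (a : C_AbsRing) (plus x y) = plus (scal (a : C_AbsRing) x) (scal (a : C_AbsRing) y).
Proof. apply (scal_distr_l a x y). Qed.
Lemma Uscal_distr_r (a b : C) (x : U) : scal ((a + b)%C : C_AbsRing) x = plus (scal (a : C_AbsRing) x) (scal (b : C_AbsRing) x).
Proof. apply (scal_distr_r a b x). Qed.
Lemma Uscal_assoc (a b : C) (x : U) : scal (a : C_AbsRing) (scal (b : C_AbsRing) x) = scal ((a * b)%C : C_AbsRing) x.
Proof. apply (scal_assoc a b x). Qed.
Lemma Uscal_one (x : U) : scal (RtoC 1 : C_AbsRing) x = x. Proof. apply (scal_one x). Qed.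
Lemma Uscal_zero (x : U) : scal (RtoC 0 : C_AbsRing) x = zero. Proof. apply (scal_zero_l x). Qed.
Lemma Uscal_zero_r (a : C) : scal (a : C_AbsRing) (zero : U) = zero. Proof. apply (scal_zero_r a). Qed.
Lemma Uscal_m1 (x : U) : scal (RtoC (-1) : C_AbsRing) x = opp x.
Proof.
  replace (RtoC (-1)) with (opp (one : C_AbsRing)). apply (scal_opp_one x).
  apply injective_projections; simpl; lra.
Qed.
Lemma Uscal_opp (a : C) (x : U) : scal (a : C_AbsRing) (opp x) = opp (scal (a : C_AbsRing) x).
Proof. apply (scal_opp_r a x). Qed.
Lemma Ucomb (a b : C) (x : U) : plus (scal (a : C_AbsRing) x) (scal (b : C_AbsRing) x) = scal ((a + b)%C : C_AbsRing) x.
Proof. symmetry; apply Uscal_distr_r. Qed.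
Lemma Uscal_ext (a b : C) (x : U) : a = b -> scal (a : C_AbsRing) x = scal (b : C_AbsRing) x.
Proof. intros ->; auto. Qed.
Lemma Usum_Sn (u : nat -> U) N : sum_n u (S N) = plus (sum_n u N) (u (S N)). Proof. apply sum_Sn. Qed.
Lemma Usum_O (u : nat -> U) : sum_n u 0 = u 0%nat. Proof. apply sum_O. Qed.
Lemma Upp (a b c d : U) : plus (plus a b) (plus c d) = plus (plus a c) (plus b d).
Proof. rewrite !Uplus_assoc. f_equal. rewrite <- !Uplus_assoc. f_equal. apply Uplus_comm. Qed.
Lemma Uminus_eq (x y : U) : minus x y = zero -> x = y.
Proof. intro H. transitivity (plus (minus x y) y).
  rewrite Uminus, <- Uplus_assoc, (Uplus_comm (opp y)), Uplus_opp_r, Uplus_zero_r. reflexivity.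
  rewrite H. apply Uplus_zero_l. Qed.

Lemma i0_zero : i0 cp zero = zero.
Proof. pose proof (i0_scal cp (RtoC 0) zero) as H. rewrite Uscal_zero, Bscal_zero in H. exact H. Qed.
Lemma i1_zero : i1 cp zero = zero.
Proof. pose proof (i1_scal cp (RtoC 0) zero) as H. rewrite Uscal_zero, Bscal_zero in H. exact H. Qed.
Lemma i0_opp x : i0 cp (opp x) = opp (i0 cp x).
Proof. rewrite <- Bscal_m1, i0_scal. apply Uscal_m1. Qed.
Lemma i1_opp x : i1 cp (opp x) = opp (i1 cp x).
Proof. rewrite <- Bscal_m1, i1_scal. apply Uscal_m1. Qed.
Lemma i0_minus x y : i0 cp (minus x y) = minus (i0 cp x) (i0 cp y).
Proof. unfold minus at 1. rewrite i0_plus, i0_opp. reflexivity. Qed.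
Lemma i1_minus x y : i1 cp (minus x y) = minus (i1 cp x) (i1 cp y).
Proof. unfold minus at 1. rewrite i1_plus, i1_opp. reflexivity. Qed.
Lemma i0_sum (u : nat -> B0) N : i0 cp (sum_n u N) = sum_n (fun n => i0 cp (u n)) N.
Proof.
  induction N. rewrite Usum_O. f_equal. apply sum_O.
  rewrite Usum_Sn, <- IHN, <- i0_plus. f_equal. apply sum_Sn.
Qed.
Lemma i1_sum (u : nat -> B1) N : i1 cp (sum_n u N) = sum_n (fun n => i1 cp (u n)) N.
Proof.
  induction N. rewrite Usum_O. f_equal. apply sum_O.
  rewrite Usum_Sn, <- IHN, <- i1_plus. f_equal. apply sum_Sn.
Qed.

Lemma Klt_zero eps : 0 < eps -> Klt cp zero eps.
Proof.
  intro H. exists zero, zero. rewrite i0_zero, i1_zero, Uplus_zero_r. split; auto.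
  rewrite !Bnorm_zero. lra.
Qed.

Lemma Klt_mono x r r' : r <= r' -> Klt cp x r -> Klt cp x r'.
Proof. intros H [a [b [E N]]]. exists a, b. split; auto. lra. Qed.

Lemma Klt_plus x y r r' : Klt cp x r -> Klt cp y r' -> Klt cp (plus x y) (r + r').
Proof.
  intros [a [b [E N]]] [a' [b' [E' N']]]. exists (plus a a'), (plus b b').
  split. rewrite i0_plus, i1_plus, E, E'. apply Upp.
  pose proof (Bnorm_triangle _ a a'). pose proof (Bnorm_triangle _ b b'). lra.
Qed.

Lemma Klt_opp x r : Klt cp x r -> Klt cp (opp x) r.
Proof.
  intros [a [b [E N]]]. exists (opp a), (opp b). split.
  rewrite E, Uopp_plus, i0_opp, i1_opp. auto. rewrite !Bnorm_opp. auto.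
Qed.

Lemma Klt_scal (l : C) x r : Klt cp x r -> Klt cp (scal (l : C_AbsRing) x) ((Cmod l + 1) * r).
Proof.
  intros [a [b [E N]]]. exists (scal (l : C_AbsRing) a), (scal (l : C_AbsRing) b). split.
  rewrite E, Uscal_distr_l, i0_scal, i1_scal. auto.
  pose proof (Bnorm_scal _ l a). pose proof (Bnorm_scal _ l b).
  pose proof (Cmod_ge_0 l). pose proof (norm_ge_0 a). pose proof (norm_ge_0 b).
  assert (0 < r) by lra. nra.
Qed.

Lemma Klt_i0 a r : norm a < r -> Klt cp (i0 cp a) r.
Proof. intro H. exists a, zero. rewrite i1_zero, Uplus_zero_r, Bnorm_zero. split; auto; lra. Qed.
Lemma Klt_i1 b r : norm b < r -> Klt cp (i1 cp b) r.
Proof. intro H. exists zero, b. rewrite i0_zero, Uplus_zero_l, Bnorm_zero. split; auto; lra. Qed.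

Lemma Khaus x : (forall eps, 0 < eps -> Klt cp x eps) -> x = zero.
Proof. intro H. apply c_hausdorff. intros eps He. apply H; auto. Qed.

Definition Kconv (u : nat -> U) (x : U) : Prop :=
  forall eps, 0 < eps -> exists N, forall n, (N <= n)%nat -> Klt cp (minus x (u n)) eps.

Lemma Kconv_unique u x y : Kconv u x -> Kconv u y -> x = y.
Proof.
  intros Hx Hy. apply Uminus_eq, Khaus. intros eps He.
  destruct (Hx (eps/2)) as [N1 H1]; [lra|]. destruct (Hy (eps/2)) as [N2 H2]; [lra|].
  assert (h1 : (N1 <= N1 + N2)%nat) by lia. assert (h2 : (N2 <= N1 + N2)%nat) by lia.
  specialize (H1 _ h1). specialize (H2 _ h2). apply Klt_opp in H2.
  replace eps with (eps/2 + eps/2) by lra.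
  replace (minus x y) with (plus (minus x (u (N1 + N2)%nat)) (opp (minus y (u (N1 + N2)%nat)))).
  apply Klt_plus; auto.
  rewrite !Uminus, Uopp_plus, Uopp_opp.
  rewrite Upp, (Uplus_comm (opp _)), Uplus_opp_r. rewrite Uplus_zero_r. reflexivity.
Qed.

Lemma Kconv_ext u v x : (forall n, u n = v n) -> Kconv u x -> Kconv v x.
Proof. intros E H eps He. destruct (H eps He) as [N HN]. exists N. intros. rewrite <- E. auto. Qed.

Lemma Kconv_plus u v x y : Kconv u x -> Kconv v y -> Kconv (fun n => plus (u n) (v n)) (plus x y).
Proof.
  intros Hx Hy eps He.
  destruct (Hx (eps/2)) as [N1 H1]; [lra|]. destruct (Hy (eps/2)) as [N2 H2]; [lra|].
  exists (N1 + N2)%nat. intros n Hn.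
  assert (h1 : (N1 <= n)%nat) by lia. assert (h2 : (N2 <= n)%nat) by lia.
  replace eps with (eps/2 + eps/2) by lra.
  replace (minus (plus x y) (plus (u n) (v n))) with (plus (minus x (u n)) (minus y (v n))).
  apply Klt_plus; auto.
  rewrite !Uminus, Uopp_plus. apply Upp.
Qed.

Lemma Kconv_scal (l : C) u x : Kconv u x -> Kconv (fun n => scal (l : C_AbsRing) (u n)) (scal (l : C_AbsRing) x).
Proof.
  intros H eps He.
  destruct (H (eps / (Cmod l + 1))) as [N HN].
  { apply Rdiv_lt_0_compat; auto. pose proof (Cmod_ge_0 l); lra. }
  exists N. intros n Hn.
  replace eps with ((Cmod l + 1) * (eps / (Cmod l + 1))) by (field; pose proof (Cmod_ge_0 l); lra).
  replace (minus (scal (l : C_AbsRing) x) (scal (l : C_AbsRing) (u n))) with (scal (l : C_AbsRing) (minus x (u n))).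
  apply Klt_scal; auto.
  rewrite !Uminus, Uscal_distr_l, Uscal_opp. auto.
Qed.

Lemma Kconv_const c : Kconv (fun _ => c) c.
Proof. intros eps He. exists 0%nat. intros. rewrite Uminus, Uplus_opp_r. apply Klt_zero; auto. Qed.

Lemma Kconv_i0 (u : nat -> B0) l : conv u l -> Kconv (fun n => i0 cp (u n)) (i0 cp l).
Proof.
  intros H eps He. destruct (H eps He) as [N HN]. exists N. intros n Hn.
  rewrite <- i0_minus. apply Klt_i0. rewrite Bnorm_minus_sym. apply HN; auto.
Qed.
Lemma Kconv_i1 (u : nat -> B1) l : conv u l -> Kconv (fun n => i1 cp (u n)) (i1 cp l).
Proof.
  intros H eps He. destruct (H eps He) as [N HN]. exists N. intros n Hn.
  rewrite <- i1_minus. apply Klt_i1. rewrite Bnorm_minus_sym. apply HN; auto.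
Qed.

End UW.
Arguments Uplus_comm {cp}.
Arguments Uplus_assoc {cp}.
Arguments Uplus_zero_r {cp}.
Arguments Uplus_zero_l {cp}.
Arguments Uplus_opp_r {cp}.
Arguments Uminus {cp}.
Arguments Uopp_plus {cp}.
Arguments Uopp_opp {cp}.
Arguments Uplus_reg_l {cp}.
Arguments Uscal_distr_l {cp}.
Arguments Uscal_distr_r {cp}.
Arguments Uscal_assoc {cp}.
Arguments Uscal_one {cp}.
Arguments Uscal_zero {cp}.
Arguments Uscal_zero_r {cp}.
Arguments Uscal_m1 {cp}.
Arguments Uscal_opp {cp}.
Arguments Ucomb {cp}.
Arguments Uscal_ext {cp}.
Arguments Usum_Sn {cp}.
Arguments Usum_O {cp}.
Arguments Upp {cp}.
Arguments Uminus_eq {cp}.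



Lemma zp_S z n : zp z (S n) = (z * zp z n)%C.
Proof. rewrite !zp_Cpow. reflexivity. Qed.
Lemma zp_0 z : zp z 0 = RtoC 1.
Proof. reflexivity. Qed.
Lemma zm_S z n : zm z (S n) = (/ z * zm z n)%C.
Proof. rewrite !zm_Cpow. reflexivity. Qed.
Lemma zm_0 z : zm z 0 = (/ z)%C.
Proof. rewrite zm_Cpow. simpl. rewrite Cmult_1_r. auto. Qed.

Section Tel.
Variable cp : couple.
Local Notation U := (cU cp).
Variables (F G : Z -> U) (z s : C).
Hypothesis hrec : forall m, G (m - 1)%Z = plus (F m) (scal (s : C_AbsRing) (G m)).
Hypothesis hz : z <> 0%C.

Lemma Uassoc4 (a b c d : U) : plus (plus a (plus b c)) d = plus (plus a b) (plus c d).
Proof. rewrite <- !Uplus_assoc. auto. Qed.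

Lemma Uswap (a b c : U) : plus (plus a b) c = plus (plus a c) b.
Proof. rewrite <- !Uplus_assoc. f_equal. apply Uplus_comm. Qed.

Definition Ps (H : Z -> U) N := sum_n (fun n => scal (zp z n : C_AbsRing) (H (Z.of_nat n))) N.
Definition Qs (H : Z -> U) N := sum_n (fun n => scal (zm z n : C_AbsRing) (H (- Z.of_nat (S n))%Z)) N.

Lemma telP N : plus (Ps F N) (scal (zp z (S N) : C_AbsRing) (G (Z.of_nat N))) =
  plus (scal ((z - s)%C : C_AbsRing) (Ps G N)) (G (-1)%Z).
Proof.
  induction N.
  - unfold Ps. rewrite !Usum_O. pose proof (hrec 0) as h. simpl in h. rewrite h.
    simpl Z.of_nat. rewrite zp_S, zp_0, !Uscal_one.
    rewrite Uplus_assoc, (Uplus_comm (scal _ (G 0%Z)) (F 0%Z)), <- Uplus_assoc, Ucomb.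
    f_equal. apply Uscal_ext. ring.
  - unfold Ps in *. rewrite !Usum_Sn. rewrite Uscal_distr_l.
    rewrite (Uswap (scal ((z - s)%C : C_AbsRing) _)), <- IHN.
    assert (h : G (Z.of_nat N) = plus (F (Z.of_nat (S N))) (scal (s : C_AbsRing) (G (Z.of_nat (S N))))).
    { rewrite <- hrec. f_equal. lia. }
    rewrite h, Uscal_distr_l, Uassoc4. f_equal.
    rewrite !Uscal_assoc, Ucomb. apply Uscal_ext. rewrite !zp_S. ring.
Qed.

Lemma telQ N : plus (scal ((z - s)%C : C_AbsRing) (Qs G N)) (scal (zm z N : C_AbsRing) (G (- Z.of_nat (S (S N)))%Z)) =
  plus (Qs F N) (G (-1)%Z).
Proof.
  induction N.
  - unfold Qs. rewrite !Usum_O. pose proof (hrec (-1)) as h. simpl in h. simpl Z.of_nat. simpl Z.opp. rewrite h.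
    rewrite zm_0, Uscal_distr_l, !Uscal_assoc. rewrite Uplus_assoc, (Uplus_comm _ (scal _ (F _))), <- Uplus_assoc, Ucomb.
    f_equal. rewrite <- (Uscal_one (G (-1)%Z)) at 2. apply Uscal_ext. field. auto.
  - unfold Qs in *. rewrite !Usum_Sn. rewrite Uscal_distr_l.
    rewrite (Uswap _ (scal (zm z (S N) : C_AbsRing) (F _)) (G (-1)%Z)), <- IHN.
    assert (h : G (- Z.of_nat (S (S (S N))))%Z = plus (F (- Z.of_nat (S (S N)))%Z) (scal (s : C_AbsRing) (G (- Z.of_nat (S (S N)))%Z))).
    { rewrite <- hrec. f_equal. lia. }
    rewrite h, Uscal_distr_l.
    rewrite <- !Uplus_assoc. f_equal.
    rewrite (Uplus_comm (scal (zm z N : C_AbsRing) _)), Uplus_assoc, (Uplus_comm _ (scal _ (F _))), <- Uplus_assoc. f_equal.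
    rewrite !Uscal_assoc, Ucomb. apply Uscal_ext. rewrite !zm_S. field. auto.
Qed.

End Tel.


Lemma exp_neg_nat n : exp (- IZR (Z.of_nat n)) = (exp (-1)) ^ n.
Proof.
  rewrite <- INR_IZR_INZ. induction n. simpl. rewrite Ropp_0, exp_0. auto.
  rewrite S_INR, Ropp_plus_distr, exp_plus, IHn. simpl. replace (- (1)) with (-1) by lra. apply Rmult_comm.
Qed.

Lemma exp_m1 : exp (-1) = / exp 1.
Proof. apply exp_Ropp. Qed.

Lemma nt_bound u m : 0 <= u < 1 -> INR (S m) * u ^ m <= 1 / (1 - u).
Proof.
  intro Hu. assert (H : INR (S m) * u ^ m <= (1 - u ^ (S m)) / (1 - u)).
  { induction m.
    - simpl. apply Rmult_le_reg_r with (1 - u). lra. field_simplify; lra.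
    - rewrite S_INR. apply Rmult_le_reg_r with (1 - u). lra.
      replace ((1 - u ^ S (S m)) / (1 - u) * (1 - u)) with (1 - u ^ S (S m)) by (field; lra).
      apply Rmult_le_compat_r with (r := u * (1 - u)) in IHm; [|nra].
      replace ((1 - u ^ S m) / (1 - u) * (u * (1 - u))) with (u * (1 - u ^ S m)) in IHm by (field; lra).
      pose proof (pow_le u m ltac:(lra)). pose proof (pow_le u (S m) ltac:(lra)).
      assert (u ^ S m <= 1). { pose proof (pow_decr u 0 (S m) ltac:(lra) ltac:(lia)). simpl in *. lra. }
      simpl in *. nra. }
  apply Rle_trans with (1 := H). unfold Rdiv. apply Rmult_le_compat_r.
  left. apply Rinv_0_lt_compat; lra. pose proof (pow_le u (S m) ltac:(lra)). lra.
Qed.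

Lemma pow_lip (a b : C) r n : Cmod a <= r -> Cmod b <= r ->
  Cmod (Cpow a (S n) - Cpow b (S n))%C <= INR (S n) * r ^ n * Cmod (a - b)%C.
Proof.
  intros Ha Hb. induction n.
  - simpl. rewrite !Cmult_1_r. lra.
  - replace (Cpow a (S (S n)) - Cpow b (S (S n)))%C with (a * (Cpow a (S n) - Cpow b (S n)) + (a - b) * Cpow b (S n))%C
      by (simpl; ring).
    eapply Rle_trans. apply Cmod_triangle. rewrite !Cmod_mult, Cmod_Cpow.
    pose proof (Cmod_ge_0 a). pose proof (Cmod_ge_0 (a - b)%C).
    pose proof (Cmod_ge_0 (Cpow a (S n) - Cpow b (S n))%C).
    assert (Cmod b ^ S n <= r ^ S n) by (apply pow_incr; split; [apply Cmod_ge_0|auto]).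
    assert (Cmod a * Cmod (Cpow a (S n) - Cpow b (S n))%C <= r * (INR (S n) * r ^ n * Cmod (a - b)%C)).
    { apply Rmult_le_compat; auto. }
    rewrite (S_INR (S n)). simpl in *. nra.
Qed.

Lemma coef_lip (a b : C) r n : 0 <= r < 1 -> Cmod a <= r -> Cmod b <= r ->
  Cmod (Cpow a (S n) - Cpow b (S n))%C <= Cmod (a - b)%C * (1 / (1 - r / ((1 + r) / 2))) * ((1 + r) / 2) ^ n.
Proof.
  intros Hr Ha Hb. set (rho := (1 + r) / 2).
  assert (Hrho : 0 < rho) by (unfold rho; lra).
  eapply Rle_trans. apply pow_lip; eauto.
  pose proof (nt_bound (r / rho) n ltac:(split; [apply Rdiv_le_0_compat; lra| apply Rmult_lt_reg_r with rho; auto; unfold rho in *; field_simplify; lra])).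
  replace (r ^ n) with ((r / rho) ^ n * rho ^ n) by (rewrite <- Rpow_mult_distr; f_equal; field; lra).
  pose proof (Cmod_ge_0 (a - b)%C). pose proof (pow_le rho n ltac:(lra)).
  assert (0 <= (r/rho)^n) by (apply pow_le; apply Rdiv_le_0_compat; lra).
  apply Rle_trans with (Cmod (a - b)%C * rho ^ n * (INR (S n) * (r / rho) ^ n)). right; ring.
  apply Rle_trans with (Cmod (a - b)%C * rho ^ n * (1 / (1 - r / rho))).
  apply Rmult_le_compat_l. apply Rmult_le_pos; auto. exact H. right; ring.
Qed.

Section NM3.
Context {B : NormedModule C_AbsRing}.

Lemma conv_geom_zero (b : nat -> B) M r : 0 <= r < 1 -> (forall n, norm (b n) <= M * r ^ n) -> conv b zero.
Proof.
  intros Hr Hb eps He.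
  assert (HM : 0 <= M) by (specialize (Hb 0%nat); simpl in Hb; pose proof (norm_ge_0 (b 0%nat)); lra).
  destruct (pow_lt_1_zero r ltac:(rewrite Rabs_pos_eq; lra) (eps / (M + 1))) as [N HN].
  { apply Rdiv_lt_0_compat; lra. }
  exists N. intros n Hn. specialize (HN n Hn). rewrite Rabs_pos_eq in HN by (apply pow_le; lra).
  rewrite (@minus_zero_r (NormedModule.AbelianGroup _ B)).
  eapply Rle_lt_trans. apply Hb.
  apply Rle_lt_trans with ((M + 1) * r ^ n). pose proof (pow_le r n ltac:(lra)). nra.
  apply Rmult_lt_compat_l with (r := M + 1) in HN; [|lra].
  replace ((M + 1) * (eps / (M + 1))) with eps in HN by (field; lra). lra.
Qed.

Lemma series_diff (a b : nat -> B) la lb M q : 0 <= q < 1 ->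
  conv (sum_n a) la -> conv (sum_n b) lb ->
  (forall k, norm (minus (a k) (b k)) <= M * q ^ k) -> norm (minus la lb) <= M / (1 - q).
Proof.
  intros Hq Ha Hb Hk.
  assert (HM : 0 <= M) by (specialize (Hk 0%nat); simpl in Hk; pose proof (norm_ge_0 (minus (a 0%nat) (b 0%nat))); lra).
  apply (conv_norm_le (fun N => minus (sum_n a N) (sum_n b N))).
  - unfold minus at 2. apply conv_plus; auto.
    apply (conv_ext (fun n => scal (opp one : C_AbsRing) (sum_n b n))). intro n. apply nscal_opp_one.
    rewrite <- nscal_opp_one. apply conv_scal. auto.
  - intro N. assert (H : norm (minus (sum_n a N) (sum_n b N)) <= M * (1 - q ^ (S N)) / (1 - q)).
    { induction N.
      + rewrite !sum_O. specialize (Hk 0%nat). simpl in *. replace (M * (1 - q * 1) / (1 - q)) with M by (field; lra). lra.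
      + rewrite !sum_Sn. rewrite minus_plus_plus. eapply Rle_trans. apply norm_triangle.
        specialize (Hk (S N)).
        replace (M * (1 - q ^ S (S N)) / (1 - q)) with (M * (1 - q ^ S N) / (1 - q) + M * q ^ S N) by (simpl; field; lra).
        lra. }
    apply Rle_trans with (1 := H). unfold Rdiv. apply Rmult_le_compat_r.
    left. apply Rinv_0_lt_compat; lra. pose proof (pow_le q (S N) ltac:(lra)). nra.
Qed.

End NM3.


Lemma Cpow_mult (a b : C) n : Cpow (a * b)%C n = (Cpow a n * Cpow b n)%C.
Proof. induction n; simpl. ring. rewrite IHn. ring. Qed.

Lemma Cmod_RtoC_pos (x : R) : 0 <= x -> Cmod (RtoC x) = x.
Proof. intro H. rewrite Cmod_R. apply Rabs_pos_eq; auto. Qed.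

Lemma Bscal_minus_r (B : BanachC) (a b : C) (x : B) : minus (scal (a : C_AbsRing) x) (scal (b : C_AbsRing) x) = scal ((a - b)%C : C_AbsRing) x.
Proof. exact (eq_sym (@scal_minus_distr_r _ (CompleteNormedModule.ModuleSpace _ B) a b x)). Qed.

Lemma Uscal_inj (cp : couple) (a : C) (x y : cU cp) : a <> 0%C -> scal (a : C_AbsRing) x = scal (a : C_AbsRing) y -> x = y.
Proof.
  intros Ha H. rewrite <- (Uscal_one x), <- (Uscal_one y).
  replace (RtoC 1) with (/ a * a)%C by (field; auto).
  rewrite <- !Uscal_assoc, H. auto.
Qed.

Section Main.
Variable cp : couple.
Local Notation U := (cU cp).
Local Notation B0 := (cB0 cp).
Local Notation B1 := (cB1 cp).
Variables (F : Z -> U) (ga : Z -> B0) (gc : Z -> B1) (Ga Gc : R) (s : C).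
Hypothesis hga : forall n, norm (ga n) <= Ga.
Hypothesis hgc : forall n, norm (gc n) <= Gc * exp (- IZR n).
Hypothesis hr0 : forall m, i0 cp (ga (m - 1)%Z) = plus (F m) (scal (s : C_AbsRing) (i0 cp (ga m))).
Hypothesis hr1 : forall m, i1 cp (gc (m - 1)%Z) = plus (F m) (scal (s : C_AbsRing) (i1 cp (gc m))).

Lemma Ga_pos : 0 <= Ga.
Proof. pose proof (hga 0%Z). pose proof (norm_ge_0 (ga 0%Z)). lra. Qed.
Lemma Gc_pos : 0 <= Gc.
Proof. pose proof (hgc 0%Z). pose proof (norm_ge_0 (gc 0%Z)). simpl in H. rewrite Ropp_0, exp_0 in H. lra. Qed.

Lemma gc_bound n : norm (gc (Z.of_nat n)) <= Gc * (/ exp 1) ^ n.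
Proof. rewrite <- exp_m1, <- exp_neg_nat. apply hgc. Qed.

Lemma term1_bound z n : Cmod (zp z n) * norm (gc (Z.of_nat n)) <= Gc * (Cmod z / exp 1) ^ n.
Proof.
  rewrite zp_Cpow, Cmod_Cpow. pose proof (gc_bound n). pose proof (Cmod_ge_0 z).
  apply Rle_trans with (Cmod z ^ n * (Gc * (/ exp 1) ^ n)).
  apply Rmult_le_compat_l; auto. apply pow_le; auto.
  right. unfold Rdiv. rewrite Rpow_mult_distr. ring.
Qed.

Lemma ser1 z : Cmod z < exp 1 -> exists l1, conv (sum_n (fun n => scal (zp z n : C_AbsRing) (gc (Z.of_nat n)))) l1.
Proof.
  intro Hz. pose proof (exp_pos 1). pose proof (Cmod_ge_0 z).
  destruct (geom_seriesC (B := B1) (fun n => scal (zp z n : C_AbsRing) (gc (Z.of_nat n))) Gc (Cmod z / exp 1)) as [l [Hl _]].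
  { split. apply Rdiv_le_0_compat; lra. apply Rmult_lt_reg_r with (exp 1); auto. field_simplify; lra. }
  { intro k. eapply Rle_trans. apply Bnorm_scal. apply term1_bound. }
  exists l. exact Hl.
Qed.

Lemma term0_bound z n : 1 < Cmod z -> Cmod (zm z n) * norm (ga (- Z.of_nat (S n))%Z) <= Ga * (/ Cmod z) ^ n.
Proof.
  intro Hz. rewrite zm_Cpow, Cmod_Cpow, Cmod_inv by (intro h; rewrite h, Cmod_0 in Hz; lra).
  pose proof (hga (- Z.of_nat (S n))%Z). pose proof Ga_pos.
  assert (0 < / Cmod z < 1). { split. apply Rinv_0_lt_compat; lra. rewrite <- Rinv_1. apply Rinv_lt_contravar; lra. }
  pose proof (pow_le (/ Cmod z) n ltac:(lra)).
  apply Rle_trans with ((/ Cmod z) ^ S n * Ga). apply Rmult_le_compat_l; auto. apply pow_le; lra.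
  simpl. assert (0 <= (/ Cmod z)^n * Ga) by (apply Rmult_le_pos; lra). nra.
Qed.

Lemma ser0 z : 1 < Cmod z -> exists l0, conv (sum_n (fun n => scal (zm z n : C_AbsRing) (ga (- Z.of_nat (S n))%Z))) l0.
Proof.
  intro Hz.
  assert (0 < / Cmod z < 1). { split. apply Rinv_0_lt_compat; lra. rewrite <- Rinv_1. apply Rinv_lt_contravar; lra. }
  destruct (geom_seriesC (B := B0) (fun n => scal (zm z n : C_AbsRing) (ga (- Z.of_nat (S n))%Z)) Ga (/ Cmod z)) as [l [Hl _]].
  { lra. }
  { intro k. eapply Rle_trans. apply Bnorm_scal. apply term0_bound; auto. }
  exists l. exact Hl.
Qed.


Lemma ident (z : C) (hz0 : z <> 0%C) (hzr : Cmod z < exp 1) (hz1 : 1 < Cmod z) xp xm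
  (hxp : Kseries cp (fun n => scal (zpowC z (Z.of_nat n) : C_AbsRing) (F (Z.of_nat n))) xp)
  (hxm : Kseries cp (fun n => scal (zpowC z (- Z.of_nat (S n)) : C_AbsRing) (F (- Z.of_nat (S n))%Z)) xm)
  l1 l0 (h1 : conv (sum_n (fun n => scal (zp z n : C_AbsRing) (gc (Z.of_nat n)))) l1)
  (h0 : conv (sum_n (fun n => scal (zm z n : C_AbsRing) (ga (- Z.of_nat (S n))%Z))) l0) :
  plus (plus xp xm) (i0 cp (ga (-1)%Z)) =
  plus (scal ((z - s)%C : C_AbsRing) (plus (i1 cp l1) (i0 cp l0))) (i1 cp (gc (-1)%Z)).
Proof.
  pose proof (exp_pos 1). pose proof (Cmod_ge_0 z). pose proof Gc_pos. pose proof Ga_pos.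
  assert (Hq1 : 0 <= Cmod z / exp 1 < 1).
  { split. apply Rdiv_le_0_compat; lra. apply Rmult_lt_reg_r with (exp 1); auto. field_simplify; lra. }
  assert (Hq0 : 0 <= / Cmod z < 1). { split. left; apply Rinv_0_lt_compat; lra. rewrite <- Rinv_1. apply Rinv_lt_contravar; lra. }
  assert (EP : plus xp zero = plus (scal ((z - s)%C : C_AbsRing) (i1 cp l1)) (i1 cp (gc (-1)%Z))).
  { apply (Kconv_unique cp (fun N => plus (Ps cp z F N) (scal (zp z (S N) : C_AbsRing) (i1 cp (gc (Z.of_nat N)))))).
    - apply Kconv_plus. exact hxp.
      rewrite <- i1_zero. apply (Kconv_ext cp (fun N => i1 cp (scal (zp z (S N) : C_AbsRing) (gc (Z.of_nat N))))).
      intro; apply i1_scal. apply Kconv_i1.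
      refine (@conv_geom_zero (CompleteNormedModule.NormedModule _ B1) _ (Gc * Cmod z) (Cmod z / exp 1) Hq1 _).
      intro N. eapply Rle_trans. apply Bnorm_scal.
      apply Rle_trans with (Cmod (zp z (S N)) * (Gc * (/ exp 1) ^ N)).
      apply Rmult_le_compat_l. apply Cmod_ge_0. apply gc_bound.
      rewrite zp_Cpow, Cmod_Cpow. unfold Rdiv. rewrite Rpow_mult_distr. simpl. right; ring.
    - apply (Kconv_ext cp (fun N => plus (scal ((z - s)%C : C_AbsRing) (Ps cp z (fun m => i1 cp (gc m)) N)) (i1 cp (gc (-1)%Z)))).
      intro N; symmetry; apply (telP cp F (fun m => i1 cp (gc m)) z s hr1).
      apply Kconv_plus. apply Kconv_scal.
      apply (Kconv_ext cp (fun N => i1 cp (sum_n (fun n => scal (zp z n : C_AbsRing) (gc (Z.of_nat n))) N))).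
      intro N. unfold Ps. rewrite i1_sum. apply sum_n_ext; intro; apply i1_scal.
      apply Kconv_i1; auto. apply Kconv_const. }
  assert (EQ : plus (scal ((z - s)%C : C_AbsRing) (i0 cp l0)) zero = plus xm (i0 cp (ga (-1)%Z))).
  { apply (Kconv_unique cp (fun N => plus (scal ((z - s)%C : C_AbsRing) (Qs cp z (fun m => i0 cp (ga m)) N))
                                          (scal (zm z N : C_AbsRing) (i0 cp (ga (- Z.of_nat (S (S N)))%Z))))).
    - apply Kconv_plus. apply Kconv_scal.
      apply (Kconv_ext cp (fun N => i0 cp (sum_n (fun n => scal (zm z n : C_AbsRing) (ga (- Z.of_nat (S n))%Z)) N))).
      intro N. unfold Qs. rewrite i0_sum. apply sum_n_ext; intro; apply i0_scal.
      apply Kconv_i0; auto.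
      rewrite <- i0_zero. apply (Kconv_ext cp (fun N => i0 cp (scal (zm z N : C_AbsRing) (ga (- Z.of_nat (S (S N)))%Z)))).
      intro; apply i0_scal. apply Kconv_i0.
      refine (@conv_geom_zero (CompleteNormedModule.NormedModule _ B0) _ Ga (/ Cmod z) Hq0 _).
      intro N. eapply Rle_trans. apply Bnorm_scal.
      pose proof (term0_bound z N hz1).
      replace (- Z.of_nat (S (S N)))%Z with (- Z.of_nat (S (S N)))%Z in H3 by reflexivity.
      rewrite zm_Cpow, Cmod_Cpow in H3 |- *. pose proof (hga (- Z.of_nat (S (S N)))%Z).
      apply Rle_trans with (Cmod (/ z) ^ S N * Ga). apply Rmult_le_compat_l; auto. apply pow_le, Cmod_ge_0.
      rewrite Cmod_inv by auto. simpl. assert (0 <= (/ Cmod z) ^ N) by (apply pow_le; lra). assert (0 <= (/ Cmod z) ^ N * Ga) by (apply Rmult_le_pos; lra). nra.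
    - apply (Kconv_ext cp (fun N => plus (Qs cp z F N) (i0 cp (ga (-1)%Z)))).
      intro N; symmetry; apply (telQ cp F (fun m => i0 cp (ga m)) z s hr0 hz0).
      apply Kconv_plus. exact hxm. apply Kconv_const. }
  rewrite Uplus_zero_r in EP, EQ. rewrite EP, <- Uplus_assoc, <- EQ, Uscal_distr_l. apply Uswap.
Qed.


Lemma propagate (hs0 : s <> 0%C) (h : i0 cp (ga (-1)%Z) = i1 cp (gc (-1)%Z)) : forall m, i0 cp (ga m) = i1 cp (gc m).
Proof.
  assert (up : forall m, i0 cp (ga (m - 1)%Z) = i1 cp (gc (m - 1)%Z) -> i0 cp (ga m) = i1 cp (gc m)).
  { intros m H. rewrite hr0, hr1 in H. apply Uplus_reg_l in H. eapply Uscal_inj; eauto. }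
  assert (down : forall m, i0 cp (ga m) = i1 cp (gc m) -> i0 cp (ga (m - 1)%Z) = i1 cp (gc (m - 1)%Z)).
  { intros m H. rewrite hr0, hr1, H. auto. }
  assert (P : forall m, i0 cp (ga (m - 1)%Z) = i1 cp (gc (m - 1)%Z)).
  { apply Z.peano_ind.
    - exact h.
    - intros x Hx. replace (Z.succ x - 1)%Z with x by lia. apply up; auto.
    - intros x Hx. replace (Z.pred x - 1)%Z with ((x - 1) - 1)%Z by lia. apply down; auto. }
  intro m. pose proof (P (m + 1)%Z). replace (m + 1 - 1)%Z with m in H by lia. auto.
Qed.

Lemma lip1 (R1 : R) : Cmod s <= R1 -> R1 < exp 1 -> exists L, 0 <= L /\ forall (w : C), Cmod w <= R1 ->
  forall l1w l1s, conv (sum_n (fun n => scal (zp w n : C_AbsRing) (gc (Z.of_nat n)))) l1w ->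
  conv (sum_n (fun n => scal (zp s n : C_AbsRing) (gc (Z.of_nat n)))) l1s ->
  norm (minus l1w l1s) <= Cmod (w - s)%C * L.
Proof.
  intros Hs HR. pose proof (exp_pos 1). pose proof Gc_pos. pose proof (Cmod_ge_0 s).
  set (r := R1 / exp 1). set (rho := (1 + r) / 2). set (K := 1 / (1 - r / rho)).
  assert (Hr : 0 <= r < 1). { unfold r. split. apply Rdiv_le_0_compat; lra. apply Rmult_lt_reg_r with (exp 1); auto. field_simplify; lra. }
  assert (Hrho : 0 < rho < 1) by (unfold rho; lra).
  assert (HK : 0 < K). { unfold K. apply Rdiv_lt_0_compat. lra. assert (r / rho < 1). apply Rmult_lt_reg_r with rho; try lra. unfold rho; field_simplify; lra. lra. }
  exists (Gc * K / (exp 1 * rho) / (1 - rho)). split.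
  { apply Rdiv_le_0_compat. apply Rdiv_le_0_compat. nra. nra. lra. }
  intros w Hw l1w l1s Hc1 Hc2.
  replace (Cmod (w - s)%C * (Gc * K / (exp 1 * rho) / (1 - rho))) with ((Cmod (w - s)%C * Gc * K / (exp 1 * rho)) / (1 - rho)) by (field; lra).
  apply (@series_diff (CompleteNormedModule.NormedModule _ B1) (fun n => scal (zp w n : C_AbsRing) (gc (Z.of_nat n))) (fun n => scal (zp s n : C_AbsRing) (gc (Z.of_nat n))) l1w l1s _ rho); [lra|exact Hc1|exact Hc2|].
  intro k. match goal with |- norm ?X <= _ => replace X with (scal ((zp w k - zp s k)%C : C_AbsRing) (gc (Z.of_nat k))) by (symmetry; apply Bscal_minus_r) end.
  eapply Rle_trans. apply Bnorm_scal.
  apply Rle_trans with (Cmod (zp w k - zp s k)%C * (Gc * (/ exp 1) ^ k)).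
  apply Rmult_le_compat_l. apply Cmod_ge_0. apply gc_bound.
  pose proof (Cmod_ge_0 (w - s)%C). destruct k.
  - rewrite !zp_0. replace (RtoC 1 - RtoC 1)%C with (RtoC 0) by ring. rewrite Cmod_0.
    simpl. apply Rle_trans with 0. lra. apply Rmult_le_pos. apply Rdiv_le_0_compat. apply Rmult_le_pos; [apply Rmult_le_pos|]; lra. apply Rmult_lt_0_compat; lra. simpl; lra.
  - rewrite !zp_Cpow.
    assert (E : Cmod (Cpow w (S k) - Cpow s (S k))%C * (/ exp 1) ^ S k =
                Cmod (Cpow (w * / exp 1) (S k) - Cpow (s * / exp 1) (S k))%C).
    { rewrite !Cpow_mult. replace (Cpow w (S k) * Cpow (/ exp 1) (S k) - Cpow s (S k) * Cpow (/ exp 1) (S k))%C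
        with ((Cpow w (S k) - Cpow s (S k)) * Cpow (RtoC (/ exp 1)) (S k))%C.
      rewrite Cmod_mult, Cmod_Cpow, Cmod_RtoC_pos. auto. left; apply Rinv_0_lt_compat; auto.
      rewrite RtoC_inv by lra. ring. }
    assert (Hw' : Cmod (w * / exp 1)%C <= r).
    { rewrite Cmod_mult, Cmod_inv, Cmod_R, Rabs_pos_eq by (try lra; intro hh; apply RtoC_inj in hh; lra). unfold r. unfold Rdiv. apply Rmult_le_compat_r; auto. left; apply Rinv_0_lt_compat; auto. }
    assert (Hs' : Cmod (s * / exp 1)%C <= r).
    { rewrite Cmod_mult, Cmod_inv, Cmod_R, Rabs_pos_eq by (try lra; intro hh; apply RtoC_inj in hh; lra). unfold r. unfold Rdiv. apply Rmult_le_compat_r; auto. left; apply Rinv_0_lt_compat; auto. }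
    pose proof (coef_lip _ _ r k Hr Hw' Hs') as HL. fold rho in HL. fold K in HL.
    replace ((w * / exp 1) - (s * / exp 1))%C with ((w - s) * / exp 1)%C in HL by ring.
    rewrite Cmod_mult, Cmod_inv, Cmod_R, Rabs_pos_eq in HL by (try lra; intro hh; apply RtoC_inj in hh; lra).
    apply Rle_trans with (Gc * (Cmod (Cpow w (S k) - Cpow s (S k))%C * (/ exp 1) ^ S k)). right; ring.
    rewrite E. pose proof (pow_le rho k ltac:(lra)).
    apply Rle_trans with (Gc * (Cmod (w - s)%C * / exp 1 * K * rho ^ k)). apply Rmult_le_compat_l; auto.
    right. simpl. field. lra.
Qed.

Lemma lip0 (R0 : R) : 1 < R0 -> R0 <= Cmod s -> exists L, 0 <= L /\ forall (w : C), R0 <= Cmod w ->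
  forall l0w l0s, conv (sum_n (fun n => scal (zm w n : C_AbsRing) (ga (- Z.of_nat (S n))%Z))) l0w ->
  conv (sum_n (fun n => scal (zm s n : C_AbsRing) (ga (- Z.of_nat (S n))%Z))) l0s ->
  norm (minus l0w l0s) <= Cmod (w - s)%C * L.
Proof.
  intros HR Hs. pose proof Ga_pos.
  set (r := / R0). set (rho := (1 + r) / 2). set (K := 1 / (1 - r / rho)).
  assert (Hr : 0 <= r < 1). { unfold r. split. left; apply Rinv_0_lt_compat; lra. rewrite <- Rinv_1. apply Rinv_lt_contravar; lra. }
  assert (Hrho : 0 < rho < 1) by (unfold rho; lra).
  assert (HK : 0 < K). { unfold K. apply Rdiv_lt_0_compat. lra. assert (r / rho < 1). apply Rmult_lt_reg_r with rho; try lra. unfold rho; field_simplify; lra. lra. }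
  exists (K * Ga / (1 - rho)). split.
  { apply Rdiv_le_0_compat. nra. lra. }
  intros w Hw l0w l0s Hc1 Hc2.
  assert (Hw0 : w <> 0%C) by (intro hh; rewrite hh, Cmod_0 in Hw; lra).
  assert (Hs0 : s <> 0%C) by (intro hh; rewrite hh, Cmod_0 in Hs; lra).
  replace (Cmod (w - s)%C * (K * Ga / (1 - rho))) with ((Cmod (w - s)%C * K * Ga) / (1 - rho)) by (field; lra).
  apply (@series_diff (CompleteNormedModule.NormedModule _ B0) (fun n => scal (zm w n : C_AbsRing) (ga (- Z.of_nat (S n))%Z)) (fun n => scal (zm s n : C_AbsRing) (ga (- Z.of_nat (S n))%Z)) l0w l0s _ rho); [lra|exact Hc1|exact Hc2|].
  intro k. match goal with |- norm ?X <= _ => replace X with (scal ((zm w k - zm s k)%C : C_AbsRing) (ga (- Z.of_nat (S k))%Z)) by (symmetry; apply Bscal_minus_r) end.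
  eapply Rle_trans. apply Bnorm_scal.
  pose proof (Cmod_ge_0 (w - s)%C).
  apply Rle_trans with (Cmod (zm w k - zm s k)%C * Ga).
  apply Rmult_le_compat_l. apply Cmod_ge_0. apply hga.
  rewrite !zm_Cpow.
  assert (Hw' : Cmod (/ w) <= r). { rewrite Cmod_inv by auto. unfold r. apply Rinv_le_contravar; lra. }
  assert (Hs' : Cmod (/ s) <= r). { rewrite Cmod_inv by auto. unfold r. apply Rinv_le_contravar; lra. }
  pose proof (coef_lip _ _ r k Hr Hw' Hs') as HL. fold rho in HL. fold K in HL.
  assert (Hd : Cmod (/ w - / s)%C <= Cmod (w - s)%C).
  { replace (/ w - / s)%C with ((w - s) * (- / (w * s)))%C by (field; auto).
    rewrite Cmod_mult, Cmod_opp, Cmod_inv, Cmod_mult.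
    assert (1 <= Cmod w * Cmod s) by nra.
    assert (/ (Cmod w * Cmod s) <= 1). { rewrite <- Rinv_1. apply Rinv_le_contravar; lra. }
    assert (0 <= / (Cmod w * Cmod s)) by (left; apply Rinv_0_lt_compat; lra). nra.
    intro hh. apply (f_equal Cmod) in hh. rewrite Cmod_mult, Cmod_0 in hh. nra. }
  pose proof (pow_le rho k ltac:(lra)).
  apply Rle_trans with (Cmod (/ w - / s)%C * K * rho ^ k * Ga).
  apply Rmult_le_compat_r; auto. rewrite Rmult_assoc. auto.
  assert (0 <= K * rho ^ k * Ga) by (apply Rmult_le_pos; [apply Rmult_le_pos|]; lra).
  apply Rle_trans with (Cmod (w - s)%C * (K * rho ^ k * Ga)). 
  rewrite !Rmult_assoc. apply Rmult_le_compat_r; auto. rewrite <- !Rmult_assoc. lra.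
  right; ring.
Qed.

End Main.

Lemma Uminus_split (cp : couple) (a b c : cU cp) : minus a c = plus (minus a b) (minus b c).
Proof.
  etransitivity. exact (@alg_tel_g (ModuleSpace.AbelianGroup _ (cU cp)) a b c).
  exact (@plus_comm (AbelianGroup.AbelianMonoid (ModuleSpace.AbelianGroup _ (cU cp))) _ _).
Qed.

Lemma Uscal_cancel (cp : couple) (a : C) (x y : cU cp) : a <> RtoC 0 ->
  scal ((/ a)%C : C_AbsRing) (minus (minus (scal (a : C_AbsRing) x) zero) (scal (a : C_AbsRing) y)) = minus x y.
Proof.
  intro Ha.
  transitivity (scal ((/ a)%C : C_AbsRing) (scal (a : C_AbsRing) (minus x y))).
  f_equal. transitivity (minus (scal (a : C_AbsRing) x) (scal (a : C_AbsRing) y)).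
  f_equal. exact (@minus_zero_r (ModuleSpace.AbelianGroup _ (cU cp)) _).
  exact (eq_sym (@scal_minus_distr_l _ (cU cp) a x y)).
  etransitivity. exact (@scal_assoc _ (cU cp) _ _ _).
  transitivity (scal (one : C_AbsRing) (minus x y)).
  f_equal. change ((/ a * a)%C = RtoC 1). field; auto.
  exact (@scal_one _ (cU cp) _).
Qed.

Lemma deriv_step (cp : couple) (s : C) (hs : inA s) (f : C -> cU cp) (gs ys : cU cp)
  (hd : Kderiv cp f s gs) (hfs : f s = zero) (L rad : R) (hrad : 0 < rad) (hL : 0 <= L)
  (H : forall w, inA w -> w <> s -> Cmod (w - s)%C < rad -> exists yw,
       f w = scal ((w - s)%C : C_AbsRing) yw /\ forall eps, 0 < eps -> Klt cp (minus ys yw) (L * Cmod (w - s)%C + eps)) :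
  ys = gs.
Proof.
  destruct hs as [hs1 hs2].
  apply Uminus_eq, Khaus. intros eps He.
  destruct (hd (eps / 4)) as [del [Hdel Hd]]; [lra|].
  set (d := Rmin (Rmin del rad) (Rmin 1 (Rmin (eps / (4 * (L + 1))) (exp 1 - Cmod s))) / 2).
  assert (Hd0 : 0 < d).
  { unfold d. apply Rdiv_lt_0_compat; [|lra]. repeat apply Rmin_pos; try lra. apply Rdiv_lt_0_compat; lra. }
  assert (Hdd : d < del /\ d < rad /\ d <= 1 /\ d <= eps / (4 * (L + 1)) /\ d < exp 1 - Cmod s).
  { unfold d. pose proof (Rmin_l (Rmin del rad) (Rmin 1 (Rmin (eps / (4 * (L + 1))) (exp 1 - Cmod s)))).
    pose proof (Rmin_r (Rmin del rad) (Rmin 1 (Rmin (eps / (4 * (L + 1))) (exp 1 - Cmod s)))).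
    pose proof (Rmin_l del rad). pose proof (Rmin_r del rad).
    pose proof (Rmin_l 1 (Rmin (eps / (4 * (L + 1))) (exp 1 - Cmod s))). pose proof (Rmin_r 1 (Rmin (eps / (4 * (L + 1))) (exp 1 - Cmod s))).
    pose proof (Rmin_l (eps / (4 * (L + 1))) (exp 1 - Cmod s)). pose proof (Rmin_r (eps / (4 * (L + 1))) (exp 1 - Cmod s)).
    assert (0 < Rmin (Rmin del rad) (Rmin 1 (Rmin (eps / (4 * (L + 1))) (exp 1 - Cmod s)))).
    { repeat apply Rmin_pos; try lra. apply Rdiv_lt_0_compat; lra. }
    repeat split; lra. }
  destruct Hdd as [Hd1 [Hd2 [Hd3 [Hd4 Hd5]]]].
  assert (hs0 : 0 < Cmod s) by lra.
  set (w := (s * RtoC (1 + d / Cmod s))%C).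
  assert (Hws : (w - s)%C = (s * RtoC (d / Cmod s))%C).
  { unfold w. rewrite RtoC_plus. ring. }
  assert (Hwsm : Cmod (w - s)%C = d).
  { rewrite Hws, Cmod_mult, Cmod_R, Rabs_pos_eq. field. lra. apply Rdiv_le_0_compat; lra. }
  assert (Hwm : Cmod w = Cmod s + d).
  { unfold w. rewrite Cmod_mult.
    rewrite Cmod_R, Rabs_pos_eq. field. lra. assert (0 <= d / Cmod s) by (apply Rdiv_le_0_compat; lra). lra. }
  assert (HwA : inA w) by (unfold inA; lra).
  assert (Hwne : w <> s) by (intro hh; rewrite hh in Hwsm; replace (s - s)%C with (RtoC 0) in Hwsm by ring; rewrite Cmod_0 in Hwsm; lra).
  destruct (H w HwA Hwne ltac:(lra)) as [yw [Hfw HK]].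
  specialize (Hd w ltac:(lra) Hwne). rewrite Hfw, hfs in Hd.
  assert (Hd' : Klt cp (minus yw gs) (2 * (eps / 4))).
  { apply Klt_scal with (l := (/ (w - s))%C) in Hd.
    assert (Hne : (w - s)%C <> RtoC 0) by (intro hh; rewrite hh, Cmod_0 in Hwsm; lra).
    match type of Hd with Klt _ ?X _ => assert (E : X = minus yw gs) by (apply Uscal_cancel; auto) end.
    rewrite E in Hd.
    rewrite Cmod_inv, Hwsm in Hd by auto. eapply Klt_mono; [|exact Hd].
    replace ((/ d + 1) * (eps / 4 * d)) with (eps / 4 * (1 + d)) by (field; lra). nra. }
  specialize (HK (eps / 4) ltac:(lra)).
  rewrite (Uminus_split cp ys yw gs). eapply Klt_mono; [|apply Klt_plus; [exact HK|exact Hd']].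
  rewrite Hwsm. assert (L * d <= eps / 4).
  { apply Rle_trans with (L * (eps / (4 * (L + 1)))). apply Rmult_le_compat_l; auto.
    apply Rle_trans with ((L + 1) * (eps / (4 * (L + 1)))). nra. right; field; lra. }
  lra.
Qed.


Lemma coefA (m : Z) : (RtoC (exp (- IZR (m - 1))) * (/ RtoC (exp 1) * RtoC (exp (IZR m))))%C = RtoC 1.
Proof.
  assert (E : exp (- IZR (m - 1)) = exp 1 * / exp (IZR m)).
  { rewrite minus_IZR, <- exp_Ropp, <- exp_plus. f_equal. ring. }
  rewrite E, RtoC_mult, RtoC_inv by (apply Rgt_not_eq, exp_pos).
  assert (RtoC (exp 1) <> RtoC 0) by (intro h; apply RtoC_inj in h; pose proof (exp_pos 1); lra).
  assert (RtoC (exp (IZR m)) <> RtoC 0) by (intro h; apply RtoC_inj in h; pose proof (exp_pos (IZR m)); lra).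
  field; auto.
Qed.

Lemma coefB (m : Z) (s : C) : (RtoC (exp (- IZR (m - 1))) * (s * / RtoC (exp 1)))%C = (s * RtoC (exp (- IZR m)))%C.
Proof.
  assert (E : exp (- IZR (m - 1)) = exp 1 * exp (- IZR m)).
  { rewrite minus_IZR, <- exp_plus. f_equal. ring. }
  rewrite E, RtoC_mult.
  assert (RtoC (exp 1) <> RtoC 0) by (intro h; apply RtoC_inj in h; pose proof (exp_pos 1); lra).
  field; auto.
Qed.

Section GG. Context {G : AbelianGroup}.
Local Notation M := (AbelianGroup.AbelianMonoid G).
Lemma pp_g (a b c d : G) : plus (plus a b) (plus c d) = plus (plus a c) (plus b d).
Proof. rewrite !(@plus_assoc M). f_equal. rewrite <- !(@plus_assoc M). f_equal. apply (@plus_comm M). Qed.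
Lemma minus_pp_g (a b c d : G) : minus (plus a b) (plus c d) = plus (minus b d) (minus a c).
Proof.
  unfold minus. rewrite opp_plus. rewrite pp_g. apply (@plus_comm M).
Qed.
End GG.

Lemma Uplus_reg_r' (cp : couple) (r x y : cU cp) : plus x r = plus y r -> x = y.
Proof. intro H. apply (Uplus_reg_l r). rewrite !(Uplus_comm r). auto. Qed.

Theorem lemma3p3 (X0 X1 : pseudolattice)
  (hX0 : translation_invariant X0) (hX1 : translation_invariant X1)
  (cp : couple) (fa : Z -> cB0 cp) (fc : Z -> cB1 cp)
  (hfJ : inJ X0 X1 cp fa fc)
  (f : C -> cU cp)
  (hf : forall z, inA z -> laurent_sum cp (fun n => i0 cp (fa n)) z (f z))
  (s : C) (hs : inA s) (hfs : f s = zero)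
  (g : C -> cU cp)
  (hgs : Kderiv cp f s (g s))
  (hgz : forall z, inA z -> z <> s -> g z = scal ((/ (z - s))%C : C_AbsRing) (f z)) :
  exists (ga : Z -> cB0 cp) (gc : Z -> cB1 cp),
    inJ X0 X1 cp ga gc /\
    (forall z, inA z -> laurent_sum cp (fun n => i0 cp (ga n)) z (g z)) /\
    Jnorm X0 X1 cp ga gc <= delta s * Jnorm X0 X1 cp fa fc.
Proof.
  destruct hfJ as [hfeq [hfa hfc]].
  pose proof hs as hsA. destruct hs as [hs1 hs2].
  pose proof (exp_pos 1) as He.
  assert (hs0 : s <> 0%C) by (intro h; rewrite h, Cmod_0 in hs1; lra).
  assert (Hqa : Cmod (/ s) < 1).
  { rewrite Cmod_inv by auto. rewrite <- Rinv_1. apply Rinv_lt_contravar; lra. }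
  destruct (pl_series X0 hX0 (cB0 cp) fa (- / s)%C (/ s)%C 0 (-1) hfa Hqa) as [ga [hgam [hgan hgar]]].
  assert (He0 : RtoC (exp 1) <> RtoC 0) by (intro h; apply RtoC_inj in h; lra).
  assert (Hcme : Cmod (/ RtoC (exp 1)) = / exp 1).
  { rewrite Cmod_inv by auto. rewrite Cmod_R, Rabs_pos_eq; lra. }
  assert (Hqc : Cmod (s * / RtoC (exp 1))%C < 1).
  { rewrite Cmod_mult, Hcme. apply Rmult_lt_reg_r with (exp 1); auto. field_simplify; lra. }
  destruct (pl_series X1 hX1 (cB1 cp) (eweight fc) (/ RtoC (exp 1))%C (s * / RtoC (exp 1))%C 1 1 hfc Hqc)
    as [v1 [hvm [hvn hvr]]].
  set (gc := fun n : Z => scal (RtoC (exp (- IZR n)) : C_AbsRing) (v1 n)).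
  assert (Hew : eweight gc = v1).
  { apply functional_extensionality; intro n. unfold eweight, gc. rewrite Bscal_assoc.
    rewrite <- RtoC_mult, <- exp_plus, Rplus_opp_r, exp_0. apply Bscal_one. }
  set (Ga := pl_norm X0 (cB0 cp) ga). set (Gc := pl_norm X1 (cB1 cp) v1).
  assert (hga : forall n, norm (ga n) <= Ga) by (intro n; apply pl_coord; auto).
  assert (hgc : forall n, norm (gc n) <= Gc * exp (- IZR n)).
  { intro n. unfold gc. eapply Rle_trans. apply Bnorm_scal. rewrite Cmod_RtoC_pos by (left; apply exp_pos).
    rewrite Rmult_comm. apply Rmult_le_compat_r. left; apply exp_pos. apply pl_coord; auto. }
  set (F := fun n => i0 cp (fa n)).
  assert (hr0 : forall m, i0 cp (ga (m - 1)%Z) = plus (F m) (scal (s : C_AbsRing) (i0 cp (ga m)))).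
  { intro m. pose proof (hgar m) as E. rewrite Z.add_0_r in E. replace (m + -1)%Z with (m - 1)%Z in E by lia.
    rewrite E, i0_plus, !i0_scal, Uscal_distr_l, !Uscal_assoc.
    replace (s * - / s)%C with (RtoC (-1)) by (field; auto). replace (s * / s)%C with (RtoC 1) by (field; auto).
    rewrite Uscal_m1, Uscal_one, Uplus_assoc. unfold F. rewrite Uplus_opp_r, Uplus_zero_l. auto. }
  assert (hr1 : forall m, i1 cp (gc (m - 1)%Z) = plus (F m) (scal (s : C_AbsRing) (i1 cp (gc m)))).
  { intro m. unfold F. rewrite hfeq. unfold gc. rewrite !i1_scal.
    rewrite (hvr (m - 1)%Z). replace (m - 1 + 1)%Z with m by lia. unfold eweight.
    rewrite i1_plus, !i1_scal, Uscal_distr_l, !Uscal_assoc.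
    f_equal.
    - rewrite <- (Uscal_one (i1 cp (fc m))) at 2. apply Uscal_ext. etransitivity; [|apply (coefA m)]; ring.
    - apply Uscal_ext. etransitivity; [|apply (coefB m s)]; ring. }
  assert (Hid : forall z, inA z -> forall l1 l0,
     conv (sum_n (fun n => scal (zp z n : C_AbsRing) (gc (Z.of_nat n)))) l1 ->
     conv (sum_n (fun n => scal (zm z n : C_AbsRing) (ga (- Z.of_nat (S n))%Z))) l0 ->
     plus (f z) (i0 cp (ga (-1)%Z)) = plus (scal ((z - s)%C : C_AbsRing) (plus (i1 cp l1) (i0 cp l0))) (i1 cp (gc (-1)%Z))).
  { intros z hz l1 l0 H1 H0. destruct (hf z hz) as [xp [xm [hxp [hxm hfz]]]]. rewrite hfz.
    destruct hz as [hz1 hz2].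
    apply (ident cp F ga gc Ga Gc s hga hgc hr0 hr1 z); auto.
    intro h; rewrite h, Cmod_0 in hz1; lra. }
  assert (HD : i0 cp (ga (-1)%Z) = i1 cp (gc (-1)%Z)).
  { destruct (ser1 cp gc Gc hgc s hs2) as [l1 H1]. destruct (ser0 cp ga Ga hga s hs1) as [l0 H0].
    pose proof (Hid s hsA l1 l0 H1 H0) as E. rewrite hfs in E.
    replace (s - s)%C with (RtoC 0) in E by ring. rewrite Uscal_zero, !Uplus_zero_l in E. exact E. }
  pose proof (propagate cp F ga gc s hr0 hr1 hs0 HD) as heq.
  assert (Hfz : forall z, inA z -> forall l1 l0,
     conv (sum_n (fun n => scal (zp z n : C_AbsRing) (gc (Z.of_nat n)))) l1 ->
     conv (sum_n (fun n => scal (zm z n : C_AbsRing) (ga (- Z.of_nat (S n))%Z))) l0 ->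
     f z = scal ((z - s)%C : C_AbsRing) (plus (i1 cp l1) (i0 cp l0))).
  { intros z hz l1 l0 H1 H0. pose proof (Hid z hz l1 l0 H1 H0) as E. rewrite HD in E.
    apply Uplus_reg_r' in E. exact E. }
  exists ga, gc. split; [|split].
  - split. exact heq. split. exact hgam. rewrite Hew. exact hvm.
  - intros z hz. pose proof hz as [hz1 hz2].
    destruct (ser1 cp gc Gc hgc z hz2) as [l1 H1]. destruct (ser0 cp ga Ga hga z hz1) as [l0 H0].
    exists (i1 cp l1), (i0 cp l0). split; [|split].
    + apply (Kconv_ext cp (fun N => i1 cp (sum_n (fun n => scal (zp z n : C_AbsRing) (gc (Z.of_nat n))) N))).
      intro N. rewrite i1_sum. apply sum_n_ext. intro n. rewrite i1_scal, <- heq. reflexivity.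
      apply Kconv_i1; auto.
    + apply (Kconv_ext cp (fun N => i0 cp (sum_n (fun n => scal (zm z n : C_AbsRing) (ga (- Z.of_nat (S n))%Z)) N))).
      intro N. rewrite i0_sum. apply sum_n_ext. intro n. rewrite i0_scal. reflexivity.
      apply Kconv_i0; auto.
    + destruct (classic (z = s)) as [Hzs|Hzs].
      * subst z. symmetry.
        destruct (lip1 cp gc Gc s hgc ((Cmod s + exp 1) / 2) ltac:(lra) ltac:(lra)) as [L1 [hL1 HL1]].
        destruct (lip0 cp ga Ga s hga ((1 + Cmod s) / 2) ltac:(lra) ltac:(lra)) as [L0 [hL0 HL0]].
        set (rad := Rmin ((exp 1 - Cmod s) / 2) ((Cmod s - 1) / 2)).
        assert (Hrad : 0 < rad) by (apply Rmin_pos; lra).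
        assert (Hr1 : rad <= (exp 1 - Cmod s) / 2) by apply Rmin_l.
        assert (Hr2 : rad <= (Cmod s - 1) / 2) by apply Rmin_r.
        apply (deriv_step cp s hsA f (g s) _ hgs hfs (L1 + L0) rad Hrad ltac:(lra)).
        intros w hw hws hwr. pose proof hw as [hw1 hw2].
        destruct (ser1 cp gc Gc hgc w hw2) as [l1w H1w]. destruct (ser0 cp ga Ga hga w hw1) as [l0w H0w].
        exists (plus (i1 cp l1w) (i0 cp l0w)). split. apply Hfz; auto.
        intros eps Heps.
        assert (Ht1 : Cmod w <= Cmod s + Cmod (w - s)%C).
        { replace w with (s + (w - s))%C at 1 by ring. apply Cmod_triangle. }
        assert (Ht2 : Cmod s <= Cmod w + Cmod (w - s)%C).
        { replace s with (w + - (w - s))%C at 1 by ring. rewrite <- (Cmod_opp (w - s)%C). apply Cmod_triangle. }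
        pose proof (HL1 w ltac:(lra) l1w l1 H1w H1) as E1.
        pose proof (HL0 w ltac:(lra) l0w l0 H0w H0) as E0.
        exists (minus l0 l0w), (minus l1 l1w). split.
        { rewrite i0_minus, i1_minus. exact (@minus_pp_g (ModuleSpace.AbelianGroup _ (cU cp)) _ _ _ _). }
        rewrite Bnorm_minus_sym in E1, E0.
        replace ((L1 + L0) * Cmod (w - s)%C) with (Cmod (w - s)%C * L1 + Cmod (w - s)%C * L0) by ring. eapply Rle_lt_trans; [apply Rplus_le_compat; [exact E0|exact E1]|lra].
      * assert (Hzs' : (z - s)%C <> RtoC 0).
        { intro h. apply Hzs. replace z with (z - s + s)%C by ring. rewrite h. ring. }
        rewrite (hgz z hz Hzs), (Hfz z hz l1 l0 H1 H0), Uscal_assoc.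
        replace (/ (z - s) * (z - s))%C with (RtoC 1) by (field; auto). apply Uscal_one.
  - unfold Jnorm. rewrite Hew. fold Ga Gc.
    set (C0 := pl_norm X0 (cB0 cp) fa) in *. set (C1 := pl_norm X1 (cB1 cp) (eweight fc)) in *.
    assert (HC0 : 0 <= C0) by (apply pl_norm_ge0; auto).
    assert (HC1 : 0 <= C1) by (apply pl_norm_ge0; auto).
    rewrite Cmod_opp, Cmod_inv in hgan by auto.
    replace (/ Cmod s / (1 - / Cmod s)) with (/ (Cmod s - 1)) in hgan by (field; lra).
    rewrite Hcme, Cmod_mult, Hcme in hvn.
    replace (/ exp 1 / (1 - Cmod s * / exp 1)) with (/ (exp 1 - Cmod s)) in hvn by (field; lra).
    unfold delta.
    assert (0 < / (Cmod s - 1)) by (apply Rinv_0_lt_compat; lra).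
    assert (0 < / (exp 1 - Cmod s)) by (apply Rinv_0_lt_compat; lra).
    pose proof (Rmax_l (/ (Cmod s - 1)) (/ (exp 1 - Cmod s))). pose proof (Rmax_r (/ (Cmod s - 1)) (/ (exp 1 - Cmod s))).
    pose proof (Rmax_l C0 C1). pose proof (Rmax_r C0 C1).
    apply Rmax_lub.
    + eapply Rle_trans. exact hgan. apply Rmult_le_compat; lra.
    + eapply Rle_trans. exact hvn. apply Rmult_le_compat; lra.
Qed.
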